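(* For every $t \in \mathbb{N}_0$ and every integer $b \ge 3$, the cyclotomic polynomial $\Phi_b(x)$ does not divide \begin{align*} T_t(x) = {}& x^{8t+27} + x^{8t+26} + x^{8t+25} + x^{8t+22} + x^{8t+20} + x^{8t+18} + x^{8t+17} - x^{8t+16} - x^{8t+15} + 2x^{6t+15} \\ & - x^{4t+26} - x^{4t+25} + x^{4t+23} - x^{4t+21} - x^{4t+20} + x^{4t+19} - x^{4t+18} - x^{4t+17} + 3x^{4t+14} - 3x^{4t+13} \\ & + x^{4t+10} + x^{4t+9} - x^{4t+8} + x^{4t+7} + x^{4t+6} - x^{4t+4} + x^{4t+2} + x^{4t+1} - 2x^{2t+12} \\ & + x^{12} + x^{11} - x^{10} - x^9 - x^7 - x^5 - x^2 - x - 1. \end{align*}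
   Context: $\Phi_b(x) = \prod_\zeta (x-\zeta)$, where $\zeta$ ranges over the primitive $b$-th roots of unity, is the $b$-th cyclotomic polynomial. *)

(* Defs.v *)
From HB Require Import structures.
From mathcomp Require Import all_boot all_order all_algebra all_field.
Set Implicit Arguments. Unset Strict Implicit. Unset Printing Implicit Defensive.
Import GRing.Theory.
Local Open Scope ring_scope.

Definition Tpoly (t : nat) : {poly int} :=
    'X^(8*t+27) + 'X^(8*t+26) + 'X^(8*t+25) + 'X^(8*t+22) + 'X^(8*t+20)
  + 'X^(8*t+18) + 'X^(8*t+17) - 'X^(8*t+16) - 'X^(8*t+15) + 2 * 'X^(6*t+15)
  - 'X^(4*t+26) - 'X^(4*t+25) + 'X^(4*t+23) - 'X^(4*t+21) - 'X^(4*t+20)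
  + 'X^(4*t+19) - 'X^(4*t+18) - 'X^(4*t+17) + 3 * 'X^(4*t+14) - 3 * 'X^(4*t+13)
  + 'X^(4*t+10) + 'X^(4*t+9) - 'X^(4*t+8) + 'X^(4*t+7) + 'X^(4*t+6)
  - 'X^(4*t+4) + 'X^(4*t+2) + 'X^(4*t+1) - 2 * 'X^(2*t+12)
  + 'X^12 + 'X^11 - 'X^10 - 'X^9 - 'X^7 - 'X^5 - 'X^2 - 'X - 1.

(* Main.v *)
From Stdlib Require Import ZArith.
Require Import Defs.
From HB Require Import structures.
From mathcomp Require Import all_boot all_order all_algebra all_field.
From mathcomp Require Import ssrZ zify ring lra.
Import Order.TTheory GRing.Theory Num.Theory.
Local Open Scope ring_scope.

Fixpoint addl (p q : list Z) : list Z :=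
  match p, q with
  | nil, _ => q
  | _, nil => p
  | a :: p', b :: q' => Z.add a b :: addl p' q'
  end.
Definition scall (c : Z) (p : list Z) : list Z := map (Z.mul c) p.
Definition negl (p : list Z) : list Z := map Z.opp p.
Fixpoint mull (p q : list Z) : list Z :=
  match p with
  | nil => nil
  | a :: p' => addl (scall a q) (Z0 :: mull p' q)
  end.
Fixpoint add2 (P Q : list (list Z)) : list (list Z) :=
  match P, Q with
  | nil, _ => Q
  | _, nil => P
  | a :: P', b :: Q' => addl a b :: add2 P' Q'
  end.
Definition scal2 (c : list Z) (P : list (list Z)) := map (mull c) P.
Fixpoint mul2 (P Q : list (list Z)) : list (list Z) :=
  match P with
  | nil => nil
  | a :: P' => add2 (scal2 a Q) (nil :: mul2 P' Q)
  end.
Fixpoint sq1 (p : list Z) : list Z :=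
  match p with nil => nil | a :: p' => a :: Z0 :: sq1 p' end.
Fixpoint negx (p : list Z) : list Z :=
  match p with nil => nil | a :: p' => a :: negl (negx p') end.
Fixpoint sqY (P : list (list Z)) : list (list Z) :=
  match P with nil => nil | a :: P' => a :: nil :: sqY P' end.
Definition zero1 (p : list Z) : bool := all (Z.eqb Z0) p.
Definition zero2 (P : list (list Z)) : bool := all zero1 P.
Definition powl (n : nat) (p : list Z) : list Z := ssrnat.iter n (mull p) ((Zpos xH) :: nil).
Definition facl (k a c : nat) : list Z :=
  ssrnat.iter k (cons Z0) (mull (powl a ((Zneg xH) :: (Zpos xH) :: nil)) (powl c ((Zpos xH) :: (Zpos xH) :: nil))).

Definition zr (z : Z) : algC := (int_of_Z z)%:~R.
Arguments zr : simpl never.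
Lemma zrD a b : zr (Z.add a b) = zr a + zr b.
Proof. rewrite /zr -rmorphD /=; congr (_ %:~R); lia. Qed.
Lemma zrM a b : zr (Z.mul a b) = zr a * zr b.
Proof. rewrite /zr -rmorphM /=; congr (_ %:~R); lia. Qed.
Lemma zrN a : zr (Z.opp a) = - zr a.
Proof. rewrite /zr -rmorphN /=; congr (_ %:~R); lia. Qed.
Lemma zr0 : zr Z0 = 0. Proof. by []. Qed.
Lemma zr1 : zr (Zpos xH) = 1. Proof. by []. Qed.
Lemma zrm1 : zr (Zneg xH) = -1.
Proof. by rewrite -[Zneg xH]/(Z.opp (Zpos xH)) zrN zr1. Qed.

Lemma zrpos n : zr (Zpos n) = (Pos.to_nat n)%:R.
Proof. by rewrite /zr /= pmulrn. Qed.
Lemma zrneg n : zr (Zneg n) = - (Pos.to_nat n)%:R.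
Proof. by rewrite -[Zneg n]/(Z.opp (Zpos n)) zrN zrpos. Qed.

Definition ev1 (p : list Z) (x : algC) : algC := foldr (fun c acc => zr c + x * acc) 0 p.
Definition ev2 (P : list (list Z)) (x y : algC) : algC :=
  foldr (fun c acc => ev1 c x + y * acc) 0 P.

Lemma ev1_add p q x : ev1 (addl p q) x = ev1 p x + ev1 q x.
Proof.
elim: p q => [|a p IH] [|b q] /=; rewrite ?add0r ?addr0 //.
by rewrite IH zrD; ring.
Qed.
Lemma ev1_scal c p x : ev1 (scall c p) x = zr c * ev1 p x.
Proof. elim: p => [|a p IH] /=; rewrite ?mulr0 // IH zrM; ring. Qed.
Lemma ev1_neg p x : ev1 (negl p) x = - ev1 p x.
Proof. elim: p => [|a p IH] /=; rewrite ?oppr0 // IH zrN; ring. Qed.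
Lemma ev1_mul p q x : ev1 (mull p q) x = ev1 p x * ev1 q x.
Proof.
elim: p => [|a p IH] /=; first by rewrite mul0r.
by rewrite ev1_add ev1_scal /= IH zr0; ring.
Qed.
Lemma ev1_sq1 p x : ev1 (sq1 p) x = ev1 p (x ^+ 2).
Proof. elim: p => [|a p IH] //=; rewrite IH zr0; ring. Qed.
Lemma ev1_negx p x : ev1 (negx p) x = ev1 p (- x).
Proof. elim: p => [|a p IH] //=; rewrite ev1_neg IH; ring. Qed.
Lemma ev1_powl n p x : ev1 (powl n p) x = ev1 p x ^+ n.
Proof.
elim: n => [|n IH] /=; first by rewrite zr1 expr0; ring.
by rewrite /powl /= ev1_mul -/(powl n p) IH exprS.
Qed.
Lemma ev1_facl k a c x : ev1 (facl k a c) x = x ^+ k * ((x - 1) ^+ a * (x + 1) ^+ c).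
Proof.
rewrite /facl; elim: k => [|k IH] /=.
  rewrite ev1_mul !ev1_powl /= zrm1 zr1 expr0 mul1r.
  by congr (_ ^+ _ * _ ^+ _); ring.
by rewrite IH zr0 exprS; ring.
Qed.
Lemma Zeqb0 a : Z.eqb Z0 a = true -> a = Z0.
Proof. by case: a. Qed.
Lemma zero1P p x : zero1 p -> ev1 p x = 0.
Proof.
elim: p => [|a p IH] //= /andP[/Zeqb0 -> /IH ->]; rewrite zr0; ring.
Qed.

Lemma ev2_add P Q x y : ev2 (add2 P Q) x y = ev2 P x y + ev2 Q x y.
Proof.
elim: P Q => [|a P IH] [|b Q] /=; rewrite ?add0r ?addr0 //.
by rewrite IH ev1_add; ring.
Qed.
Lemma ev2_scal c P x y : ev2 (scal2 c P) x y = ev1 c x * ev2 P x y.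
Proof. elim: P => [|a P IH] /=; rewrite ?mulr0 // IH ev1_mul; ring. Qed.
Lemma ev2_mul P Q x y : ev2 (mul2 P Q) x y = ev2 P x y * ev2 Q x y.
Proof.
elim: P => [|a P IH] /=; first by rewrite mul0r.
by rewrite ev2_add ev2_scal /= IH; ring.
Qed.
Lemma ev2_sqY P x y : ev2 (sqY P) x y = ev2 P x (y ^+ 2).
Proof. elim: P => [|a P IH] //=; rewrite IH; ring. Qed.
Lemma ev2_map f P x y x' : (forall c, ev1 (f c) x = ev1 c x') ->
  ev2 (map f P) x y = ev2 P x' y.
Proof. move=> hf; elim: P => [|a P IH] //=; by rewrite IH hf. Qed.
Lemma zero2P P x y : zero2 P -> ev2 P x y = 0.
Proof.
elim: P => [|a P IH] //= /andP[/zero1P -> /IH ->]; ring.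
Qed.

Lemma ev1_Aint p x : x \in Aint -> ev1 p x \in Aint.
Proof.
move=> hx; elim: p => [|a p IH] /=; first exact: Aint0.
by rewrite rpredD ?rpredM // /zr Aint_int.
Qed.

Lemma stage1 (Pl Q U V : list (list Z)) (R F S : list Z) x y :
  zero2 (add2 (add2 (mul2 U Pl) (mul2 V Q)) (negl R :: nil)) ->
  zero1 (addl (mull F S) (negl R)) ->
  ev2 Pl x y = 0 -> ev2 Q x y = 0 -> ev1 F x != 0 -> ev1 S x = 0.
Proof.
move=> /(zero2P _ x y) h1 /(zero1P _ x) h2 hP hQ hF.
move: h1; rewrite !ev2_add !ev2_mul hP hQ /= ev1_neg => hR.
have eR : ev1 R x = 0.
  by apply/eqP; rewrite -oppr_eq0; apply/eqP; rewrite -[RHS]hR; ring.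
move: h2; rewrite ev1_add ev1_mul ev1_neg eR oppr0 addr0 => /eqP.
by rewrite mulf_eq0 (negbTE hF) => /eqP.
Qed.

Lemma stage2 (U V S S2 W : list Z) (p : Z) x :
  zero1 (addl (addl (mull U S) (mull V S2)) (addl ((Zneg xH) :: nil) (scall (Z.opp p) W))) ->
  (1 < int_of_Z p)%R ->
  x \in Aint -> ev1 S x = 0 -> ev1 S2 x = 0 -> False.
Proof.
move=> /(zero1P _ x) h hp hx hS hS2.
move: h; rewrite !ev1_add !ev1_mul ev1_scal hS hS2 /= zrN zrm1 => h.
have hW := ev1_Aint W x hx.
set w := ev1 W x in h hW.
have h' : 1 + zr p * w = 0.
  by apply/eqP; rewrite -oppr_eq0; apply/eqP; rewrite -[RHS]h; ring.
have pn0 : zr p != 0.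
  by rewrite /zr intr_eq0; apply/eqP => e; rewrite e in hp.
have ew : w = - (zr p)^-1.
  apply: (mulfI pn0); rewrite mulrN divff //.
  by apply/eqP; rewrite -addr_eq0 addrC h'.
have : w \in Crat by rewrite ew rpredN rpredV /zr rpred_int.
move/Cint_rat_Aint/(_ hW)/intrP => [m em].
move: hp; set q := int_of_Z p => hp.
have : ((1 + q * m)%:~R : algC) == 0.
  by rewrite intrD intrM -h' em /zr.
rewrite intr_eq0 => /eqP h0.
case: (ltgtP m 0) => hm.
- have : q * m <= - q by rewrite -mulrN1 ler_pM2l; lia.
  lia.
- have : q <= q * m by rewrite -[X in X <= _]mulr1 ler_pM2l; lia.
  lia.
- by rewrite hm mulr0 in h0; lia.
Qed.

Section Data.
Local Open Scope Z_scope.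
Definition Pl : list (list Z) := [:: [:: -1; -1; -1; 0; 0; -1; 0; -1; 0; -1; -1; 1; 1]; [:: 0; 0; 0; 0; 0; 0; 0; 0; 0; 0; 0; 0; -2]; [:: 0; 1; 1; 0; -1; 0; 1; 1; -1; 1; 1; 0; 0; -3; 3; 0; 0; -1; -1; 1; -1; -1; 0; 1; 0; -1; -1]; [:: 0; 0; 0; 0; 0; 0; 0; 0; 0; 0; 0; 0; 0; 0; 0; 2]; [:: 0; 0; 0; 0; 0; 0; 0; 0; 0; 0; 0; 0; 0; 0; 0; -1; -1; 1; 1; 0; 1; 0; 1; 0; 0; 1; 1; 1]].
Definition U_sq : list (list Z) := [:: [:: 0; 0; 0; 0; 0; 0; 0; 0; 0; 0; 0; 0; 0; 0; 0; 0; 0; 0; 0; 0; 0; 0; 0; 0; 0; 0; 0; 0; 0; 0; 0; 0; 0; 0; 0; 0; 0; 0; 0; 0; 0; 0; 0; 0; 0; 0; 0; 0; 0; 0; 0; 0; 0; 0; 0; 0; 0; 0; 0; 0; 0; 0; 0; 0; 0; 0; 0; 0; 0; 0; 0; 0; 0; 0; -8; -40; -104; -200; -328; -544; -896; -1304; -1640; -1808; -1824; -1648; -832; 656; 2408; 4056; 4752; 5352; 5432; 5296; 6720; 7880; 9600; 10008; 4960; 360; -8736; -14200; -3784; 2416; 24896; 28616; 18032; 18656; -20696; -20760; -7504; -12096; 57128; 17064; -20000; -14664; -217784; -102528; -173768; -108832; 181136; -132328; 176000; -104152; -276368; 77400; -472872; 179216; 310232; -44552; 669056; -574224; -386064; 130592;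 -1170568; 845912; -400056; 73424; 1740384; -1664640; 750096; -1314112; -1082192; 2568064; -1635784; 1738632; 686592; -1253392; 2472360; -3510688; -1479168; 2510488; -1859304; 4283656; -1390296; -3378800; 6161216; -6166824; 2047648; -861800; -4048704; 13027208; -6432864; 1486784; 696184; -6133704; 10857344; -8519688; -2312424; 8622744; -2842800; 6324136; -5918056; -10647632; 15748168; -6516136; -1918496; 4541784; -11021968; 25148288; -13291168; -10946440; 12655232; -11714264; 20971512; -16498360; -10847408; 23615760; -9843664; 2304520; -10988464; -9644808; 28304720; -10506920; -16578048; 11598904; -7043048; 24729888; -15958976; -26181440; 33585064; -10943384; 9551304; -15970632; -17383784; 44926584; -15500144; -10400312; -2996408; -6072664; 35220944; -19336648; -21421568; 24355728; 1361288; 15663232; -19034328; -24710728; 38935520; -6428456; -3748280; -4177128; -11750896; 41134416; -17156344; -20025472; 8833288; -4902984; 27987256; -14477776; -17608400; 25586344; -6518584; 3921648; -12518456; -16111256; 31143600; -7562936; -3986712; 517736; -11223688; 19951528; -13349912; -10823792; 11132232; -3371904; 12810008; -6185464; -12132952; 12421768; -7275128; 1063608; 256144; -7522776; 15571152; -5402376; -3720352; 1978504; -7973168; 9406264; -3938776; -1841368; 6762608; -3186336; 4029232; -3073112; -3706256; 4602144; -1540192; 1414488; 1622792; -2185912; 3390968; -2152840; -1717872; 1537848; -1878800; 2926544; -426840; -633008; 1514256; -1634168; 672808; -613048; -463448; 1426464; -317704; 395536; -101928; -575328; 354136; -489696; -47448; 266040; -41784; 338408; -189560; -179368; 40072; -154296;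 110488; -5896; 27368; 116368; -56800; -36824; -92928; -65048; 16552; -8568; 3968; 936; -11888; -1256; -23568; -15928; 4976; 11648; 18032; 4576; -2480; -3832; -6464; -4680; -4200; -1480; 1800; 1720; 712; -440; 128; 1768; 2384; 2264; 1864; 1536; 1072; 320; -256; -440; -400; -344; -320; -248; -136; -48; -8]; [:: 0; 0; 0; 0; 0; 0; 0; 0; 0; 0; 0; 0; 0; 0; 0; 0; 0; 0; 0; 0; 0; 0; 0; 0; 0; 0; 0; 0; 0; 0; 0; 0; 0; 0; 0; 0; 0; 0; 0; 0; 0; 0; 0; 0; 0; 0; 0; 0; 0; 0; 0; 0; 0; 0; 0; 0; 0; 0; 0; 0; 0; 0; 0; 0; 0; 0; 0; 0; 0; 0; 0; 0; 0; 0; 0; 0; 0; 0; 0; 0; 0; 0; 0; 0; 16; 64; 128; 192; 288; 496; 784; 912; 800; 624; 336; -336; -1824; -3488; -4336; -4624; -4320; -3456; -2416; -1280; -1984; -2928; -976; 1104; 7936; 16736; 21568; 21376; 5392; -9456; -12576; -20144; -9648; 7536; 13040; 31072; -13952; -35024; -16736; -49168; 34352; 57056; 90304; 160704; -5120; -28640; -7584; -172464; 73552; -38336; -71536; 410128; -372352; 177120; -306032; -640064; 787568; -776560; 850176; 10064; -459696; 1411088; -1476336; 318640; -315888; -456512; 1760144; -728448; -608560; 779168; -1177904; 408256; -13040; -3244832; 4474320; -1197536; 236896; 1504608; -6357184; 7633616; -3544256; -1404384; 2832448; -5299632; 9211088; -4936384; -5324336; 3670784; -2174912; 3830032; -1742480;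 -8049056; 9692464; 1496368; -7297696; 4698624; -11272144; 15569584; 1186064; -16097920; 14305472; -10797408; 14043824; -4221920; -19520352; 21607408; -4413984; 3798304; -3312000; -13894368; 22624256; 952224; -16007584; 8095520; -4257328; 17190496; 2505952; -32184752; 24692448; -1456288; 2267696; 1353088; -30754688; 37926480; -2213600; -15408768; 4277200; -17573296; 33508208; -5030400; -28110496; 17022960; -1995520; 13844560; -6642640; -33418720; 28488912; 3779776; -9048608; 1133552; -24217408; 33195472; 290272; -26615632; 10924976; -11643584; 24662528; -1508128; -28768752; 21541360; -3502512; 5082928; -1876592; -24762880; 26126112; 1126800; -6778208; 5104416; -15973792; 20152928; -1165360; -14249840; 10680000; -5339840; 12654640; 1036432; -15003056; 10786736; -3019024; 735232; 3427120; -10391776; 12294864; 149056; -5261248; 4296432; -9299392; 7703744; -98288; -4705728; 6980448; -4782816; 4100032; -1624960; -5180080; 3688784; -2458736; 1804256; 1000400; -2245040; 2162144; -1625696; -1726096; 799904; -1736528; 1966448; 448832; -923424; 1518544; -1866112; 350864; -346320; -763840; 1695696; -563584; 861648; -83376; -607408; 401488; -757200; 396016; 210880; 195104; 454864; -218288; -14064; -127792; -170768; 117584; 24288; 162112; 133760; -84432; -28976; -157424; -48560; 7952; 6096; 87040; 15168; 9808; -40304; -55488; -19888; -6336; 19680; 19376; 8064; -3200; -19136; -20544; -11200; -368; 9328; 8624; 5552; 1184; -2288; -2768; -1600; 1248; 2912; 2560; 960; -528; -1120; -976; -496; 112; 576; 720; 560; 288; 96; 16]; [:: 0; 0; 0;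 0; 0; 0; 0; 0; 0; 0; 0; 0; 0; 0; 0; 0; 0; 0; 0; 0; 0; 0; 0; 0; 0; 0; 0; 0; 0; 0; 0; 0; 0; 0; 0; 0; 0; 0; 0; 0; 0; 0; 0; 0; 0; 0; 0; 0; 0; 0; 0; 0; 0; 0; 0; 0; 0; 0; 0; 0; 0; 0; 0; 0; 0; 0; 0; 0; 0; 0; 0; 0; 0; 0; 0; -8; -40; -96; -160; -232; -376; -640; -888; -944; -856; -760; -632; 32; 1272; 2160; 2416; 1976; 1704; 2104; 2392; 3904; 6104; 6088; 6288; 1088; -5240; -8520; -11072; 4960; 16608; 17800; 19008; -4016; -12144; -15168; -40360; 24248; 25408; 38024; 53912; -86368; -31984; -119704; -132080; 78808; -40368; 121456; 105504; -287376; 134192; -366416; -128032; 375168; -465568; 902264; -213224; -245520; 424720; -1495720; 890400; -81528; -584960; 1637384; -1473264; 915472; 336928; -3246144; 2487168; -1741224; 1090960; 3089384; -5085904; 4555816; -2188304; -1764920; 4015272; -7576496; 6588136; 1612480; -4639400; 5777200; -9312904; 3469056; 5477752; -12163488; 9878832; -3780128; 780184; 12440536; -23133928; 11569488; 1100448; -7518528; 19065416; -25589744; 16226184; 10018000; -21906544; 16845080; -21989552; 11776536; 22664992; -33261272; 19486352; -3001712; -5680864; 27828728; -48093208; 21086328; 23074032; -27755728; 34634712; -46481688; 19508504; 35487040; -59763072; 34417352; -21304968; 13434360; 42241816; -76265816; 32540344; 12362344; -21232176; 36097664; -68399080; 35728208; 48301960; -66242440; 31830056; -40987848; 22037880; 57387936;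 -100771160; 43665552; 8422160; -5841136; 45803248; -105401080; 51145504; 44353512; -51816920; 35653480; -64714128; 48565664; 56765184; -97512056; 33563280; -10351304; 19678312; 50768584; -107362464; 47870432; 35022360; -28401456; 34151936; -83891640; 52233544; 53310616; -69363120; 29627848; -35712904; 34119464; 44553336; -89958640; 32869864; 8809704; 1597272; 31920240; -77114576; 36692456; 29887784; -33550968; 20884704; -45920552; 30667544; 32622584; -50247376; 17568400; -14066120; 11837120; 23642056; -49069920; 17656720; 8922536; -5985720; 16480152; -35546952; 14978704; 15667728; -18345984; 11965416; -17864376; 11226816; 14131112; -20221312; 8162176; -5171776; 3974128; 9423088; -14679032; 6236880; 3042872; -1849408; 5682288; -9192952; 3481384; 5080792; -4280712; 4294064; -4190680; 1914656; 3730736; -4624128; 2400896; -1576728; 877912; 2248024; -2792064; 1237368; -341152; -303976; 725432; -1437400; 417512; 396288; -561152; 379912; -739136; -99888; 210664; -596912; 280736; -286656; 30352; 96328; -310528; 60920; -133632; -10504; 47008; -45288; 56416; 23528; -35168; 20712; -25232; 30432; 36880; 8952; 47608; 14640; 26224; 11552; 5744; 20048; 17984; 19528; 12768; 5848; 5584; 3568; 1648; 1152; 1016; 3480; 2736; 584; -896; -880; -8; -200; -776; -928; -776; -824; -1136; -1280; -1064; -760; -552; -424; -288; -144; -48; -8]; [:: 0; 0; 0; 0; 0; 0; 0; 0; 0; 0; 0; 0; 0; 0; 0; 0; 0; 0; 0; 0; 0; 0; 0; 0; 0; 0; 0; 0; 0; 0; 0; 0; 0; 0; 0; 0; 0; 0;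 0; 0; 0; 0; 0; 0; 0; 0; 0; 0; 0; 0; 0; 0; 0; 0; 0; 0; 0; 0; 0; 0; 0; 0; 0; 0; 0; 0; 0; 0; 0; 0; 0; 0; 0; 0; 0; 0; 0; 0; 0; 0; 0; 0; 0; 0; 0; 16; 64; 128; 192; 272; 432; 656; 704; 496; 144; -416; -1216; -2656; -4000; -4256; -3936; -2288; 160; 2176; 3984; 1056; -1776; -704; -1072; 8928; 15696; 20656; 22960; -5568; -20528; -29872; -42416; 5776; 15936; 51184; 75152; -42336; -8656; -83872; -80768; 75088; -10400; 219552; 160512; -126352; 56112; -367104; -117008; 161232; -290720; 733888; -119568; 19120; 212240; -1188112; 515856; -578000; 241904; 1034592; -584736; 834544; -430208; -982048; 50080; -706032; 333104; 2004480; -1209136; 1077792; -66096; -2289808; 2241504; -4316160; 2317504; 2141488; -1889936; 4031488; -5526096; 1742160; 936800; -3881376; 2298816; -1471360; 3378432; 3722624; -5018720; -2990128; 2978160; -1899136; 3838720; -5913104; -1533792; 13274112; -7723024; 414944; -8494208; 574688; 15152848; -12664560; -638448; 816016; 6515120; 6600224; -16592240; -5564336; 12885712; 5613712; -5262400; -8622912; -2616384; 23851680; -6844112; -18317040; 3742608; 4032272; 23142496; -19708704; -17082448; 21713792; 8316048; 2765680; -24585968; -4544032; 32379808; 1972768; -22439728; -7105984; 13446064; 27677216; -14088976; -36179392; 20282688; 17988432; 4468336; -23394688; -22170992; 45834816; 8232352; -25643600; -19453024; -973824; 44378064; -11090656; -37618384; 10330912; 19747328; 18711440; -30730080; -36971120;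 33890400; 19270096; -8414768; -20673424; -12271712; 42633648; -2382720; -35257792; -4892896; 6586608; 35697232; -10046896; -31430320; 17909392; 6413472; 6656736; -18177472; -20739104; 34731936; 7250528; -4857200; -8559488; -11776960; 24977632; -7267600; -13453584; 7473968; 2485760; 19067952; -8582672; -15581040; 9263792; -2792288; 4632992; -2156784; -5895616; 16428624; -3205664; -4711840; -1502352; -8311488; 11219616; -3263552; -1698768; 6605424; -4646544; 5058864; -6427360; -4707952; 5077104; -2618416; 4066192; -521504; -1694944; 3233312; -4240704; -1163888; 193072; -871664; 3712448; -902352; -410224; 1138960; -2422352; 723568; -1312224; -118384; 2247424; -700384; 1043392; -751712; -661760; 541904; -984576; 613648; 276416; 301760; 623200; -540832; -36448; -157072; -128128; 279680; -8944; 264736; 143008; -106560; -42352; -174624; -4800; 67920; 29328; 105888; 8208; -4672; -43568; -70112; -9760; -1536; 24272; 15952; -2720; -9776; -24992; -23488; -12864; -944; 7904; 5072; 32; -3392; -5568; -5120; -3744; -800; 1360; 1216; -160; -1328; -1472; -976; -400; 176; 592; 720; 560; 288; 96; 16]; [:: 0; 0; 0; 0; 0; 0; 0; 0; 0; 0; 0; 0; 0; 0; 0; 0; 0; 0; 0; 0; 0; 0; 0; 0; 0; 0; 0; 0; 0; 0; 0; 0; 0; 0; 0; 0; 0; 0; 0; 0; 0; 0; 0; 0; 0; 0; 0; 0; 0; 0; 0; 0; 0; 0; 0; 0; 0; 0; 0; 0; 0; 0; 0; 0; 0; 0; 0; 0; 0; 0; 0; 0; 0; 0; 0; 0; 0;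 0; 0; 0; 0; 0; 0; 0; 0; 0; 0; 0; 0; 0; 0; 0; 0; 0; 0; 0; 0; 0; 0; 0; 0; 0; 8; 24; 24; 24; 80; 216; 288; 136; 64; 368; 528; -128; -1520; -2032; -1296; -2104; -4216; -5888; -4280; -120; -120; -1392; -688; -592; 6792; 6776; 4824; 13392; 11696; 32000; 17344; -22808; -14432; -6880; 43384; 55960; -31104; 49928; 33248; -1608; 36760; -162048; 166672; 170920; 46952; 145616; -345536; 10928; 68296; -372352; 204984; -308656; 121040; 613296; -1194464; 60504; -713448; -171760; 1336304; -1729128; 887672; 111112; -876632; 1023376; -3255944; 452392; 1906056; -1837400; 2428272; -2819008; -209032; 3290968; -5744576; 2523184; -950576; 274800; 7311928; -7641384; 2540400; 1468200; -4191336; 7430160; -9085896; 4501408; 9418272; -8267896; 6391880; -8769408; 1410064; 12498168; -15865280; 7927008; 2874440; -533736; 13026904; -24381320; 6479384; 11865048; -11059520; 11768672; -17975520; 11683000; 19572104; -29323160; 5516632; -7285152; 8190040; 20306344; -37650592; 13125176; 11643432; -7090104; 7419144; -38712736; 18637544; 26237976; -24097400; 5822136; -18546272; 17198112; 22566216; -46127944; 8415120; 6642408; 10132808; 17319872; -46474864; 16558424; 19423184; -12942696; 6019216; -30867992; 25099112; 26533160; -27580904; 3209152; -10787000; 16083816; 17433848; -34061624; 9355504; 11424368; 4391984; 9247744; -31452832; 11118168; 15591848; -9709480; 5580800; -16329440; 13796272; 13270200; -17913720; 1142912; -5757200; 7737640; 8731008; -15920280; 3640008; 2738856; 339592; 2296712;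 -13365032; 3583896; 5778176; -2715280; 1539856; -6797680; 3071448; 3807888; -5683904; 350056; -2059832; 2931864; 2930192; -4248960; 358264; -142528; 600528; 1105360; -2626136; 1203992; 1452464; 216368; 584848; -1653640; 823520; 844496; -46808; 373872; -322864; 751872; 445416; -370912; -157512; -109104; 297144; 296016; -189600; 41728; 32824; 73256; 20360; -169920; 42344; 86968; 93032; 17464; -71104; -19496; 1848; -15584; -25600; -29008; 7104; 14744; -12056; -20696; -17264; 3936; 11224; 5664; 4648; 5248; 6408; 2816; -2384; -2968; -1296; -56; -968; -2680; -2784; -1944; -1216; -952; -648; 24; 576; 688; 536; 392; 328; 248; 136; 48; 8]; [:: 0; 0; 0; 0; 0; 0; 0; 0; 0; 0; 0; 0; 0; 0; 0; 0; 0; 0; 0; 0; 0; 0; 0; 0; 0; 0; 0; 0; 0; 0; 0; 0; 0; 0; 0; 0; 0; 0; 0; 0; 0; 0; 0; 0; 0; 0; 0; 0; 0; 0; 0; 0; 0; 0; 0; 0; 0; 0; 0; 0; 0; 0; 0; 0; 0; 0; 0; 0; 0; 0; 0; 0; 0; 0; 0; 0; 0; 0; 0; 0; 0; 0; 0; 0; 0; 0; 0; 0; 0; 0; 0; 0; 0; 0; 0; 0; 0; 0; 0; 0; 0; 0; 0; 0; 0; 0; 0; 0; 0; 0; 0; 0; -16; -32; 0; 32; -16; -112; -64; 240; 304; -64; -64; 336; 784; 144; -880; 272; 1024; 480; 848; 512; 1968; -1328; -7904; -2624; -4784; -3056; 896; -5936; 4720; -8752; -15632; 20480; -3200; 13232;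 30448; -1184; 63344; -59712; -38832; 79264; -44320; 35344; -97776; -84976; 189376; -178192; -62304; 87120; -119248; 410848; -227344; -167120; 440592; -255520; 565232; -43872; -636400; 794912; -421664; 177824; 211664; -1424416; 1794688; 127360; -999136; 525120; -1913776; 2513456; 858256; -3142496; 2189248; -674736; 1363856; 492176; -6896128; 4105488; 1401584; -1805616; 1528128; -7664960; 6154336; 2333168; -9027568; 2777584; -3559296; 7712704; 4171120; -15173600; 5722096; 2110112; -119136; 2176384; -16606352; 13532480; 10798608; -12777104; 1302624; -12480032; 15144272; 10717408; -24579968; 10451504; 3640512; 10535904; 2829776; -31919104; 17022512; 14172912; -4541040; 941712; -19280720; 23415968; 14325712; -28646112; 452624; -2992544; 21188096; 12046176; -35630928; 12502032; 8882800; 1748992; -1047872; -32480256; 24144704; 17295696; -12231872; -3147152; -19452720; 19579440; 8479168; -25385376; 3432976; 1178704; 14793920; 3902624; -28626256; 6036032; 5723792; 966400; 2264304; -17767872; 14143088; 8431520; -9637344; -1802224; -11890032; 11522560; 7407776; -9325968; 3895632; -2197968; 5912096; 1532656; -11410208; 4340288; 2565312; 3820560; 2734688; -6670000; 3740032; 818208; -1851504; 912032; -2822944; 4450448; 2488704; -1843776; 514304; -2307936; 1083824; 886368; -1568672; 1715040; 6576; 671136; 207152; -2117504; 377504; -533968; 235712; 587056; -628144; 581312; -540720; -362624; -227648; -484624; 299440; 54544; 143584; 98464; -216032; -86096; -122416; -50688; 132528; 40112; 128672; 48800; -26544; -21344; -88048; 10624; 34576; 55600; 44144; 1232; 2112;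 -10080; -10256; -2736; 9152; 22944; 19616; 4512; -5104; -8864; -4656; -2000; -464; 1520; 1792; 832; -1776; -3088; -2384; -752; 368; 544; 256; -64; -400; -672; -736; -560; -288; -96; -16]; [:: 0; 0; 0; 0; 0; 0; 0; 0; 0; 0; 0; 0; 0; 0; 0; 0; 0; 0; 0; 0; 0; 0; 0; 0; 0; 0; 0; 0; 0; 0; 0; 0; 0; 0; 0; 0; 0; 0; 0; 0; 0; 0; 0; 0; 0; 0; 0; 0; 0; 0; 0; 0; 0; 0; 0; 0; 0; 0; 0; 0; 0; 0; 0; 0; 0; 0; 0; 0; 0; 0; 0; 0; 0; 0; 0; 0; 0; 0; 0; 0; 0; 0; 0; 0; 0; 0; 0; 0; 0; 0; 0; 0; 0; 0; 0; 0; 0; 0; 0; 0; 0; 0; 0; 8; 40; 96; 160; 224; 336; 552; 768; 800; 600; 240; -120; -744; -1856; -2904; -3592; -3144; -2040; -1896; -2688; -5096; -7048; -4448; -1600; 5008; 11648; 12904; 15288; -968; -14720; -11736; -5136; 28776; 38896; 16136; 23008; -41584; -32616; -6760; -32144; 118992; 65032; 90008; 88456; -169392; -23984; -36584; -53704; 353008; -145648; 138240; 102600; -634800; 341136; -776728; 183032; 593472; -592680; 1005640; -902912; -384192; 688040; -1339544; 1107264; 206240; -795048; 2656272; -2606936; 205576; 216536; -3035264; 4487488; -3222344; 834600; 2123864; -4487312; 3889640; -4114200; -1485360; 5279512; -3956064; 4248024; -255232; -5740600; 7977480; -7212368; 600328; 5175408; -8698064; 14408400; -8431328; -3023936; 8442432;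 -13557320; 14430872; -7437992; -2496840; 15659104; -11795480; 6828576; -3237584; -9038000; 18288136; -10682168; -1101616; 12923560; -14949752; 18682312; -15463184; -9997136; 24888616; -20597800; 17690888; -9838352; -8626552; 29121616; -28270248; 4924368; 648096; -7525624; 26874504; -25177880; -3895592; 18023080; -16304192; 13251544; -18530632; -7483360; 36190832; -24425128; 5524728; -5819784; -8963840; 34648400; -32477240; 420992; 12661080; -7097344; 23364808; -28906552; -4089736; 25414664; -13782120; 9622384; -14168008; -1455808; 31465504; -20676048; -840704; 312656; -2085360; 24667768; -21742648; -3045768; 13410984; -4676280; 11628352; -17434008; -3261584; 18616512; -7922920; 2338632; -6815184; -2082792; 17109976; -11777856; -2547152; 899088; -1391120; 11309760; -11313664; -2583712; 4666432; -1581720; 3478912; -7518256; -1881544; 6378424; -1996424; -494784; -2713560; -1216256; 5504488; -3020192; -1501584; 284280; -346568; 3699968; -2798640; -1025776; 1212304; -85744; 1657984; -1814008; -118776; 1421512; 282304; 351088; -674744; 85616; 1147112; 145992; -73416; 87096; 125264; 810008; -190408; -106520; 78824; 123808; 356936; -179328; -43320; 38128; 82784; 27008; -117456; -78344; 48144; 15864; -31160; -79416; -65560; 4208; -40600; -45472; -56992; -26912; -7488; -25784; -32232; -28352; -12216; -4456; -8440; -10000; -4832; -560; 184; -3328; -3072; 96; 2304; 2120; 904; 1184; 2104; 2336; 1888; 1592; 1688; 1704; 1352; 904; 600; 432; 288; 144; 48; 8]; [:: 0; 0; 0; 0; 0; 0; 0; 0; 0; 0; 0; 0; 0; 0; 0;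 0; 0; 0; 0; 0; 0; 0; 0; 0; 0; 0; 0; 0; 0; 0; 0; 0; 0; 0; 0; 0; 0; 0; 0; 0; 0; 0; 0; 0; 0; 0; 0; 0; 0; 0; 0; 0; 0; 0; 0; 0; 0; 0; 0; 0; 0; 0; 0; 0; 0; 0; 0; 0; 0; 0; 0; 0; 0; 0; 0; 0; 0; 0; 0; 0; 0; 0; 0; 0; 0; 0; 0; 0; 0; 0; 0; 0; 0; 0; 0; 0; 0; 0; 0; 0; 0; 0; 0; 0; 0; 0; 0; 0; 0; 0; 0; 0; 0; -16; -64; -128; -192; -256; -368; -544; -576; -336; 160; 960; 1808; 2992; 4128; 4320; 3888; 1584; -1808; -3856; -5264; -2128; 736; -2256; -3984; -16368; -24144; -22768; -19472; 15216; 33408; 32032; 35472; -22384; -30592; -28880; -42048; 91856; 54480; 70816; 54640; -155040; -39440; -146432; -84640; 249888; -4912; 239568; 75280; -373456; 230800; -552688; 199904; 414672; -215904; 911792; -680384; 116736; -93712; -738064; 530304; -95504; 343936; 516992; -324800; -686336; 460112; -1507792; 1192496; 150320; -937120; 2576816; -2600656; 2013104; -1127408; -1879632; 3058608; -2063248; 2322928; -1190848; -1198048; 1631648; -483664; -1662080; 178432; 30880; 371392; 2943136; -7096480; 4187872; -271376; -812912; 3726160; -9806000; 8201104; -874304; -2963888; 1125264; -5658528; 8309040; 342864; -7285344; -291392; 2557664; 1502016; 2337680; -10114592; 5654368; 10400576; -9249232; 2610096; -10909536; 10759968; 9953824; -15764752; 6978784; -2058768; 9994816; 497568; -19377776; 8792016;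 9297008; 2495120; -1917248; -11913888; 10979248; 10857264; -15600400; -2537984; -1580912; 13924416; 9404448; -22688976; 2998000; 4199776; 3636128; -682352; -20050000; 13108304; 11846016; -4990400; -5298720; -14032400; 11537504; 7227856; -13438864; -9744; -439472; 10661312; 1912656; -18461408; 1866864; 3335008; 4766336; 501136; -10572608; 7724224; 5336896; -4115168; -3147152; -6396000; 7397248; 6287504; -5634256; 1477744; -1753600; 3653264; 1483120; -7747776; 3568368; 1502048; 3258128; 1439888; -4945648; 2947568; 18432; -419392; 277488; -1565328; 3221600; 1118464; -1274992; -197632; -1148960; 608832; 616912; -1225424; 1250864; 168112; 127600; 157200; -1579648; 654688; -258832; 31216; 444576; -488704; 548144; -426560; -430800; -57424; -345264; 282960; -85024; -64768; 102640; -190848; -56240; -182192; -85040; 113088; 8032; 36272; -12816; -36848; 15072; -67008; -13744; 22448; 43056; 56032; -688; 6064; 4320; 8912; 11632; 8896; 21312; 22928; 13136; 2288; -3136; 928; 4560; 4464; 4496; 4368; 4144; 1936; -256; -496; 464; 1136; 880; 256; -160; -464; -688; -736; -560; -288; -96; -16]].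
Definition V_sq : list (list Z) := [:: [:: 0; 0; 0; 0; 0; 0; 0; 0; 0; 0; 0; 0; 0; 0; 0; 0; 0; 0; 0; 0; 0; 0; 0; 0; 0; 0; 0; 0; 0; 0; 0; 0; 0; 0; 0; 0; 0; 0; 0; 0; 0; 0; 0; 0; 0; 0; 0; 0; 0; 0; 0; 0; 0; 0; 0; 0; 0; 0; 0; 0; 0; 0; 0; 0; 0; 0; 0; 0; 0; 0; 0; 0; 0; 0; 8; 48; 128; 200; 224; 320; 688; 1152; 1120; 552; 408; 1208; 1408; -672; -2984; -1920; 1368; 1064; -4872; -9736; -8328; -6304; -7840; -9800; -3504; 10016; 12880; -968; -24488; -33392; 2056; 43824; 41360; 2992; -33976; 10936; 11720; -77560; -82088; 26856; 209256; 153616; -166664; -169728; 7728; 150968; 186752; -214336; 158736; 341888; 54400; -70464; -833632; 51752; 845008; 141416; 89712; -936016; -58360; 1706376; -1336584; -137464; -284312; 1078288; 3695120; -3846512; -193320; 626536; 1065320; 3539328; -5749232; 975104; 4611424; -1621360; 1089848; -7163352; 665424; 10388280; -7315576; 1067536; -5047680; 924152; 13133256; -16755864; 601176; 3033088; 2704040; 11806032; -23223816; 152392; 15655040; -5911136; 3365160; -18932176; 6590640; 29449544; -27104192; -4753592; -3353896; 9181416; 28978896; -46133616; 6591976; 22195168; -2686504; 7856248; -47685176; 25555624; 38838488; -27289104; -5646024; -15235104; 28658912; 28921216; -61694352; 4819872; 30141024; 10815856; 10844664; -70430632; 33152464; 44344104; -33313208; -3132168; -34976984; 57410600; 31183912;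 -72591656; 1697096; 9838856; 35779456; 2806328; -75064448; 36357072; 42000408; -17577288; -18127520; -50776672; 58188024; 37748168; -59915288; -1517112; -5511368; 47195072; 1984944; -76735032; 26075552; 29979616; 12745576; -16203240; -53104128; 44631784; 29245648; -34035768; -10714104; -13122896; 48773504; 12188392; -52645600; 6989440; 10297304; 24140664; -7183832; -38976592; 26044616; 20134280; -5264384; -13786088; -19636000; 27139704; 14472824; -20219392; -3314584; -1189944; 18334512; 1839928; -23957072; 5285104; 7105384; 8592832; -4217000; -15687016; 8546704; 5907992; -1884176; -6007984; -5321848; 8375800; 4156792; -6445424; -3357080; -309848; 4808928; 1234968; -5801576; 667352; 1678016; 2270768; -1085136; -3579992; 1502640; 1660280; 707880; -1151928; -1182376; 1243352; 990752; -470448; -687456; -88880; 1013864; 473560; -570904; -273920; 131952; 508880; 19808; -330104; -32168; 176056; 144808; -137968; -197568; 5520; 103376; 18280; -94240; -91160; 10712; 33392; -17160; -50192; -24240; 19088; 11816; -19640; -25920; -3440; 12272; 3128; -10176; -7824; 1872; 4344; -416; -2552; 624; 3288; 2424; 576; 488; 1480; 1760; 1168; 608; 472; 480; 368; 184; 56; 8]; [:: 0; 0; 0; 0; 0; 0; 0; 0; 0; 0; 0; 0; 0; 0; 0; 0; 0; 0; 0; 0; 0; 0; 0; 0; 0; 0; 0; 0; 0; 0; 0; 0; 0; 0; 0; 0; 0; 0; 0; 0; 0; 0; 0; 0; 0; 0; 0; 0; 0; 0; 0; 0; 0; 0; 0; 0; 0; 0; 0; 0; 0; 0; 0; 0; 0;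 0; 0; 0; 0; 0; 0; 0; 0; 0; 0; 0; 0; 0; 0; 0; 0; 0; 0; 0; -16; -80; -176; -224; -208; -288; -592; -736; -160; 864; 1520; 1696; 2640; 4736; 5376; 3136; 16; -1568; -224; 1296; 3824; 6992; 128; -14016; -29120; -37360; -26432; -12944; 15120; 43808; 10144; -34112; -82400; -77168; 12864; 35472; 126624; 169984; 16640; -48096; -223792; -135776; 138656; -21520; 349280; 263168; -75760; -46128; -840448; 15360; 469264; -102720; 938688; -235520; 197392; 494448; -2099216; 869872; -262176; 500592; 2727440; -2794256; 1557936; -1327968; -1519632; 2996176; -4320400; 2733872; 2047232; -919152; 2539184; -6557152; -41136; 6110160; -3421728; 1502928; -1727120; 178464; 11525840; -13302000; -3295216; 5682048; -731824; 14382256; -19704224; 587792; 16776160; -8487904; 3492464; -19460256; 9396672; 26111840; -18143024; -8677744; -455840; 10399328; 17936288; -32827440; -11202048; 34309472; -1387152; 605296; -34390368; 2171824; 53589392; -32991920; -15327280; -7723280; 22317216; 40780272; -61057856; -13575216; 34589584; 15914880; -265648; -58598992; 9953696; 66444832; -21018784; -32717536; -18220176; 30662080; 57316736; -66719472; -29888976; 39141632; 28216336; 18084528; -79616944; 1816944; 70753040; -10082448; -23216944; -44033376; 37608480; 67270096; -53289152; -34678288; 7810208; 36873456; 30463024; -69250240; -7394608; 50304240; 9805376; -9371760; -55550336; 15912128; 54232352; -21502704; -19194800; -14011312; 24355408; 31724208; -45005440; -14920928; 16518944; 16199376; 13420992; -38456880; 1109504; 24401440; -5495008; -3748032; -22032608;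 13720896; 22691040; -13525648; -6437024; -6360640; 9093184; 8764832; -15067760; -687472; 7869216; 4294768; 1506592; -12273472; 631216; 7497136; -2049936; 999792; -3867104; 4048336; 4467136; -5481712; -804752; -1282256; 2987232; 2297024; -2918736; 972848; 382800; 260256; -749264; -2126864; 1137520; 1152672; 78320; -323760; -770176; 379872; -82272; -726864; -36224; 244944; 571664; -50864; -486224; -108048; -29744; 26304; -101776; -5312; 215856; 104240; -86608; -160368; -54800; 75664; 55280; 11840; 28048; 46336; 21424; -37360; -38976; 10448; 40624; 28592; 3424; -1280; 3984; 80; -6000; -2160; 7712; 10880; 4864; -1200; -2192; -608; 112; 16; 352; 784; 480; -320; -816; -720; -368; -112; -16]; [:: 0; 0; 0; 0; 0; 0; 0; 0; 0; 0; 0; 0; 0; 0; 0; 0; 0; 0; 0; 0; 0; 0; 0; 0; 0; 0; 0; 0; 0; 0; 0; 0; 0; 0; 0; 0; 0; 0; 0; 0; 0; 0; 0; 0; 0; 0; 0; 0; 0; 0; 0; 0; 0; 0; 0; 0; 0; 0; 0; 0; 0; 0; 0; 0; 0; 0; 0; 0; 0; 0; 0; 0; 0; 0; 0; 0; 0; 0; 0; 0; 0; 0; 0; 0; 0; 0; 0; 0; -8; -48; -120; -160; -136; -184; -456; -680; -280; 576; 880; 488; 960; 3232; 4728; 2520; -984; -952; 2928; 5336; 3192; 1840; 2744; 544; -7776; -21024; -24376; -8808; 12920; 23184; -5832; -46008; -42656; -23112; -12872; -30064; -14768; 88760; 83272; -56840; -163664; -142080; 100632; 140360; -4304; 44024;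 48232; 154296; -46448; -402736; 35848; 349648; 542544; 364640; -569584; 61568; 220576; -71800; 80352; -757056; 1024016; 1251232; -816616; -664376; -1387496; 976720; 1973232; -2123824; 919096; 600840; 1205976; 1453904; -6005536; 2421208; 2293504; 1222040; 1569128; -6537936; 4861312; 1815200; -4529768; -1395496; -2853248; 8061608; 4402256; -11016384; -676408; 2466352; 2211488; 2141352; -16699288; 11653656; 11596152; -8522248; -2545360; -18467336; 21214224; 7444144; -21752040; 4536008; -123616; 22090744; -9191128; -33920664; 16179040; 17642208; 2968744; -13491504; -21321520; 34630368; 14189568; -36515712; -5845016; 1140024; 42542872; -934848; -51885968; 22479272; 14971832; 14549464; -24701976; -38598696; 53912208; 19776128; -20255680; -24221720; -11799496; 51959616; -1797704; -46358128; 6464864; 18986928; 31462952; -23002752; -49947504; 32641928; 20860016; -1135072; -23110976; -21916136; 47505216; 6018608; -30476944; -12928920; 996944; 37582560; -7331048; -33200464; 10123760; 10707152; 12968640; -18312488; -23845600; 24306432; 10411512; -2154600; -13364688; -8108112; 21896568; 521216; -11948808; -3785848; 4108432; 14948168; -3599184; -12284856; 3081656; 4628480; 4586648; -4652296; -6778592; 8282232; 3065320; -659784; -4171528; -2966512; 6623816; 104400; -1648848; -1454088; 598872; 3458080; -1674392; -2332256; -471128; 1061200; 1139208; -1130776; -1292392; 435312; 297008; -302984; -1024768; -585592; 668080; 159696; -223680; -519664; -155408; 225760; -110424; -219640; -110560; 154840; 174440; -42888; -144488; -21320; 74160; 83864; 21632; 18696; 78440; 72536; 39640; 64; 13240; 47032;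 52800; 34280; 13576; 10520; 15672; 11400; 2104; 80; 5584; 9256; 3928; -2840; -4296; -1896; -816; -2248; -3216; -2616; -1960; -2256; -2744; -2504; -1736; -1128; -848; -664; -424; -192; -56; -8]; [:: 0; 0; 0; 0; 0; 0; 0; 0; 0; 0; 0; 0; 0; 0; 0; 0; 0; 0; 0; 0; 0; 0; 0; 0; 0; 0; 0; 0; 0; 0; 0; 0; 0; 0; 0; 0; 0; 0; 0; 0; 0; 0; 0; 0; 0; 0; 0; 0; 0; 0; 0; 0; 0; 0; 0; 0; 0; 0; 0; 0; 0; 0; 0; 0; 0; 0; 0; 0; 0; 0; 0; 0; 0; 0; 0; 0; 0; 0; 0; 0; 0; 0; 0; 0; 0; 0; 0; 0; 0; 0; 0; 0; 0; 0; 0; 0; 0; 0; 16; 80; 160; 160; 112; 208; 464; 384; -448; -1344; -1568; -1808; -3088; -4608; -3440; 464; 3184; 4560; 5568; 5616; 3616; -832; 3744; 16800; 23920; 27712; 16096; -10032; -36160; -60544; -27648; 14512; 16880; 36992; 2640; -41392; -100592; -173920; 15552; 146096; 121024; 136240; -69392; 15728; -111616; -378384; 90016; 160848; 376928; 279232; -521232; -30768; -319600; -332320; 420160; -449696; 853344; 465168; -376352; 74320; -1603584; 630000; 1066752; -11952; 211472; -390256; 953376; 792544; -2362416; -1507744; 2257904; 1236160; 1204832; -3703728; -941408; 4741936; -1896016; -1091728; -3124112; 3509472; 6791072; -5101792; -3931824; 663008; 6365808; 2557008; -7637344; -3557440; 9794976; 4156400; -7354336; -6902192; 1312720; 17380160;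 -5421136; -14207408; 2143376; 8031632; 11420112; -18031248; -9984816; 17833264; 9667216; -7306480; -21150624; 1340320; 24724224; -1795856; -22310384; -2670192; 15050608; 16044928; -21542400; -25379552; 20592224; 17033824; -132112; -24854128; -7519536; 32743696; -1008272; -21425040; -13639440; 14949744; 31256192; -15278384; -24327136; 6595664; 17351392; 8219408; -23891408; -10011392; 28168512; 11515456; -9352512; -20321504; 620560; 25187920; -4151568; -13487216; -950032; 11815184; 15116880; -15902880; -14186000; 8059088; 8550720; 5767904; -11766880; -3050576; 12878496; -1266128; -5338784; -9542624; 1938176; 11957376; -3441376; -3744048; -2501552; 1617680; 3226432; -7109840; -2334480; 3448848; 2969680; 1568304; -4408512; -1718592; 2233792; -1294032; -179712; -868272; 1163712; 2941424; -2063232; -889856; -1105120; -48064; 1297312; -1027568; 899136; 575248; 38672; -38400; -1222384; 296864; 443136; 273232; 476880; 352; 350096; -60592; -373504; -9312; 120160; 369264; 204192; -11472; 75200; -48384; -73296; -82528; -8496; 154896; 89120; 6016; -66288; -69920; -30976; -41488; -22640; 6992; 22848; 4416; -34912; -43776; -24928; -6064; 256; -1632; -544; -1088; -6960; -11632; -9824; -3200; 1328; 1440; -32; -768; -720; -576; -272; 416; 1056; 1184; 832; 384; 112; 16]].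
Definition R_sq : list Z := [:: 0; 0; 0; 0; 0; 0; 0; 0; 0; 0; 0; 0; 0; 0; 0; 0; 0; 0; 0; 0; 0; 0; 0; 0; 0; 0; 0; 0; 0; 0; 0; 0; 0; 0; 0; 0; 0; 0; 0; 0; 0; 0; 0; 0; 0; 0; 0; 0; 0; 0; 0; 0; 0; 0; 0; 0; 0; 0; 0; 0; 0; 0; 0; 0; 0; 0; 0; 0; 0; 0; 0; 0; 0; 0; 0; 0; 16; 96; 272; 512; 768; 1184; 2048; 3168; 3840; 3680; 3344; 3456; 2384; -1728; -7040; -9824; -8160; -7296; -11536; -15840; -18736; -17728; -20384; -27648; -19168; 3456; 30560; 35488; -21264; -60672; -65824; -39808; 15904; -35040; 23968; 87520; 37552; -26400; -248128; -111872; 322896; 337440; 523312; 159456; -3424; 566752; -406752; 182304; -151152; 310944; 2038080; -280832; -34896; -1006976; -1282816; 1919136; -1180672; -235200; 2513312; -1152960; 4078432; -4528800; -4654976; 4154400; -4609488; 8263712; -4295248; -3934336; 9059136; -10568448; 2808208; -7807168; -7586416; 20307520; -7058480; 1024736; 1422384; -17771168; 24405680; -16152768; -10974768; 25112480; -17514720; 37587072; -19288160; -32312928; 39936992; -35162272; 29728768; -6484864; -34347968; 74857600; -39788096; -3697280; 7049264; -56216928; 91623312; -29721600; -30409712; 67128576; -68491600; 77460736; -41600176; -83237312; 120930544; -66968960; 52774192; -5904384; -104322240; 149746944; -83832880; -31638208; 60155808; -97808544; 169505664; -67865216; -101549296; 140865536; -117508128; 106237632; -45394512; -127136896; 227152016;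 -117417728; 11616000; 10178048; -137571328; 232998656; -115781920; -71472160; 128700528; -118082304; 169313456; -96621280; -140590192; 232944576; -124259472; 71939968; -27746752; -152881408; 273755680; -152881408; -27746752; 71939968; -124259472; 232944576; -140590192; -96621280; 169313456; -118082304; 128700528; -71472160; -115781920; 232998656; -137571328; 10178048; 11616000; -117417728; 227152016; -127136896; -45394512; 106237632; -117508128; 140865536; -101549296; -67865216; 169505664; -97808544; 60155808; -31638208; -83832880; 149746944; -104322240; -5904384; 52774192; -66968960; 120930544; -83237312; -41600176; 77460736; -68491600; 67128576; -30409712; -29721600; 91623312; -56216928; 7049264; -3697280; -39788096; 74857600; -34347968; -6484864; 29728768; -35162272; 39936992; -32312928; -19288160; 37587072; -17514720; 25112480; -10974768; -16152768; 24405680; -17771168; 1422384; 1024736; -7058480; 20307520; -7586416; -7807168; 2808208; -10568448; 9059136; -3934336; -4295248; 8263712; -4609488; 4154400; -4654976; -4528800; 4078432; -1152960; 2513312; -235200; -1180672; 1919136; -1282816; -1006976; -34896; -280832; 2038080; 310944; -151152; 182304; -406752; 566752; -3424; 159456; 523312; 337440; 322896; -111872; -248128; -26400; 37552; 87520; 23968; -35040; 15904; -39808; -65824; -60672; -21264; 35488; 30560; 3456; -19168; -27648; -20384; -17728; -18736; -15840; -11536; -7296; -8160; -9824; -7040; -1728; 2384; 3456; 3344; 3680; 3840; 3168; 2048; 1184; 768; 512; 272; 96; 16].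
Definition U_msq : list (list Z) := [:: [:: 0; 0; 0; 0; 0; 0; 0; 0; 0; 0; 0; 0; 0; 0; 0; 0; 0; 0; 0; 0; 0; 0; 0; 0; 0; 0; 0; 0; 0; 0; 0; 0; 0; 0; 0; 0; 0; 0; 0; 0; 0; 0; 0; 0; 0; 0; 0; 0; 0; 0; 0; 0; 0; 0; 0; 0; 0; 0; 0; 0; 0; 0; 0; 0; 0; 0; 0; 0; 0; 0; 0; 0; -8; -40; -48; 88; 240; -56; -656; -328; 1104; 1032; -1720; -2200; 3088; 5288; -4760; -13000; 2472; 24184; 8000; -32864; -24880; 35520; 41032; -43144; -67984; 54496; 126136; -37248; -205904; -41096; 252344; 146592; -250064; -228168; 267120; 342232; -319120; -608504; 226496; 935304; 125488; -1091232; -576752; 1027496; 877744; -1055552; -1280192; 1166760; 2167696; -789672; -3228408; -386216; 3658248; 1750336; -3465416; -2798432; 3414096; 4029264; -3634936; -6440968; 2477504; 8990320; 513032; -10260512; -4171232; 10089096; 7055936; -9788568; -10207344; 9422728; 15634320; -6825704; -21768736; 719168; 25151424; 7503432; -25249136; -16077728; 24094464; 23844616; -23865864; -33531520; 19296968; 46745376; -6375512; -58538496; -10271712; 62485688; 27814984; -58149152; -43078264; 57725568; 65110232; -58304656; -94067472; 41988720; 116266536; -5764896; -131093832; -28989880; 133705848; 44412536; -141137424; -78404456; 148587008; 139265744; -130455304; -194864976; 87796944; 212605896; -43877680; -218382216; 15292896; 261716832; 24210736; -300520760; -116349648; 281781712; 196386320; -225742928; -228287104; 189566896; 265409656; -193932424;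 -323851888; 142836432; 404397264; -3985968; -397943128; -73080504; 358063816; 109274824; -348947824; -140440848; 364156824; 266531488; -324495344; -377718952; 197106736; 351260024; -117444184; -343897288; 91973920; 366783224; -48236632; -439627096; -86950744; 384804648; 186073112; -262749264; -200416152; 234096736; 189723712; -234684152; -251190672; 184500104; 325024824; -48783496; -287080744; -34067520; 218312936; 18567384; -196946912; -32413352; 220204080; 118352008; -178925520; -172819008; 81442904; 145119768; -27681560; -94873504; 38411648; 115378656; -24285088; -138951928; -37694136; 98599344; 79128176; -36574864; -59601856; 16014200; 32417440; -30831584; -50653664; 12030640; 66422824; 30075168; -42995912; -46153432; 5762496; 29287392; 1969192; -19902760; 7030888; 32478192; 3973544; -37039632; -27262768; 19485968; 33195272; -2069960; -22902032; 4368; 18156224; -1865984; -23844008; -6234816; 23833192; 16670056; -13533408; -17839128; 4947712; 13602592; -3469232; -12521024; 2718728; 14161264; 1957400; -12726672; -6566624; 7987304; 7026680; -4622720; -5835232; 3496776; 5791288; -2334280; -6229608; 169208; 5353696; 1471008; -3643944; -1788192; 2477800; 1664824; -1923880; -1798104; 1286224; 1862256; -519704; -1555184; 6640; 1090528; 151184; -780760; -209792; 588192; 285368; -385592; -306368; 192728; 246384; -75520; -167048; 28184; 115600; -2920; -81480; -16664; 48496; 22480; -22280; -16984; 8504; 9984; -3312; -6000; 848; 3632; 632; -1584; -848; 320; 416; 56; -88; -48; -8]; [:: 0; 0; 0; 0; 0; 0; 0; 0; 0; 0; 0; 0; 0; 0; 0; 0; 0; 0; 0; 0; 0; 0; 0;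 0; 0; 0; 0; 0; 0; 0; 0; 0; 0; 0; 0; 0; 0; 0; 0; 0; 0; 0; 0; 0; 0; 0; 0; 0; 0; 0; 0; 0; 0; 0; 0; 0; 0; 0; 0; 0; 0; 0; 0; 0; 0; 0; 0; 0; 0; 0; 0; 0; 0; 0; 0; 0; 0; 0; 0; 0; 0; 0; 0; 0; 0; 0; 32; 128; 16; -560; -464; 1360; 1872; -2032; -4448; 2320; 8672; -2832; -17200; 1904; 33984; 10096; -55616; -43440; 68384; 91600; -61888; -134112; 50640; 187376; -43216; -302048; -8832; 460368; 185632; -533104; -465920; 467744; 701040; -415152; -860608; 441840; 1216608; -236800; -1887968; -441216; 2369792; 1318016; -2097104; -2003008; 1636176; 2735152; -1900384; -3974480; 2010656; 5564432; -113280; -6831568; -2993296; 7249488; 4563792; -6771312; -5034192; 6416496; 8296256; -6507712; -13873856; 5094528; 16665776; 108864; -15705664; -6318592; 15965136; 8710960; -18939584; -10227808; 19237776; 18034368; -13849072; -29375120; 6567392; 32678560; -691440; -26769776; -4350256; 26040832; 11226560; -35330016; -22391424; 37380928; 34411888; -19803856; -41832640; -2176096; 41012256; 1999632; -38789728; 5245808; 45026112; 15602832; -51073632; -52718640; 37197680; 65254528; -6946800; -40378464; -3108976; 36150656; -4475504; -72462416; -6792112; 92147728; 58838416; -53227728; -87763600; 2299056; 62569488; -12998704; -53621920; 52875376; 88545072; -17839696; -137223600; -74655344; 105576256; 82455344; -40045056; -35434048; 52691360; 25190864; -112374880; -111123616; 90868768; 167802112; -234608; -92460528; -28061664; 42256272;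 -37707328; -90973200; 67909472; 172016224; 29556464; -129794192; -83121568; 31200928; 27382432; -48360576; 42241968; 138302752; 10369232; -142957168; -105696896; 52045856; 69251488; -20164288; 10548336; 102362464; 4656192; -150739408; -100138528; 80415024; 120294464; -21077696; -45802864; 59789568; 28941504; -120755680; -108884480; 82766912; 153939648; -5142240; -108309200; 479440; 63483440; -44732976; -102065040; 35928336; 149086576; 31276320; -119739248; -62053008; 66423120; 36128096; -62693152; -22822560; 90492208; 58316512; -77456960; -87607008; 30221056; 72026192; -8164000; -46441344; 19187552; 50572416; -19024432; -64991840; -6582064; 55624464; 25988176; -31010160; -20799280; 20608976; 12249040; -24258288; -17996096; 20825696; 26193328; -6996944; -22586512; -2525584; 12841200; 1612416; -9486240; -67296; 10968720; 3732816; -9111328; -7431472; 3628016; 6404144; -214400; -3501488; 307488; 2737712; -463184; -3266432; -921760; 2590512; 2048448; -961296; -1730704; 47232; 969920; -54176; -771808; 54256; 852880; 287776; -629024; -507456; 237936; 406592; -31616; -228720; 22272; 171984; -11904; -163488; -46448; 110448; 77824; -39280; -56416; 5472; 27488; -2336; -16464; 1968; 14160; 3552; -8368; -6096; 1792; 3904; 1040; -1056; -832; -48; 192; 96; 16]; [:: 0; 0; 0; 0; 0; 0; 0; 0; 0; 0; 0; 0; 0; 0; 0; 0; 0; 0; 0; 0; 0; 0; 0; 0; 0; 0; 0; 0; 0; 0; 0; 0; 0; 0; 0; 0; 0; 0; 0; 0; 0; 0; 0; 0; 0; 0; 0; 0; 0; 0; 0; 0; 0; 0; 0; 0; 0; 0;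 0; 0; 0; 0; 0; 0; 0; 0; 0; 0; 0; 0; 0; 0; 0; -8; -40; -40; 128; 280; -176; -912; -168; 1896; 1160; -3312; -3080; 5880; 7528; -9960; -18760; 11520; 39432; -2608; -65264; -21160; 88584; 54784; -115584; -104744; 155360; 201248; -183576; -365616; 139472; 559248; -3664; -729136; -175920; 906248; 407936; -1158848; -849408; 1376072; 1583392; -1312472; -2434408; 905656; 3186320; -383568; -4013752; -301616; 5170912; 1688512; -6302920; -4035352; 6618448; 6730784; -6024360; -9302224; 5173720; 12291792; -4072392; -16380632; 1139856; 20498104; 4380512; -23120088; -11085536; 24156528; 17449232; -24647024; -24945360; 24320656; 35889240; -21032344; -48121936; 13093480; 57291728; -1405440; -63751792; -11502224; 70805304; 25381392; -78183904; -44200400; 79845312; 69752864; -72141856; -95197984; 60283560; 113781352; -45878520; -129634304; 28450464; 153448912; -1675928; -176237640; -38302896; 182120496; 78490768; -171468856; -112735472; 161175696; 145610392; -162868664; -190612536; 141073864; 244415264; -88232696; -273158240; 30631080; 274278456; 9282216; -291847392; -36374624; 316615000; 114470528; -317860368; -217716008; 270463816; 263337168; -205503472; -282506808; 194502352; 320137584; -156983720; -412490184; 62365432; 471014776; 55409296; -392921824; -139607160; 380854784; 156696544; -400345280; -239250136; 402438224; 407476560; -323185688; -464492960; 140272192; 461367240; -119708688; -475820272; 97804024; 547669848; 30568640; -637413376; -214095096; 512602512; 343497344; -431149064; -326669120; 424094704; 383436296; -410237720; -569009600; 312864176; 654769248; -84152712; -614712816; 15258088; 556014824; 8649944; -603367048;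 -125442696; 679163256; 306679696; -554543272; -434698352; 403580096; 423291752; -344521592; -440495288; 337351752; 559773072; -240224712; -622382672; 36805584; 570401680; 71797312; -490932296; -86821712; 484517376; 141216488; -496366904; -274968696; 404865936; 369690528; -277594480; -356481216; 203852992; 329285336; -176394728; -370662472; 109263472; 403409680; 1246064; -359384272; -75253224; 283775672; 92541664; -250849912; -111201952; 242624192; 160201800; -193962816; -195082192; 118912416; 186719368; -69443384; -163158136; 52167232; 159590768; -27033144; -159491752; -15071632; 137404856; 45000944; -102467176; -49683224; 79351464; 49520112; -67653280; -58102464; 50919272; 64774400; -27494392; -58649704; 10418696; 47093968; -3541232; -40442080; -1578776; 36602136; 9164304; -29421776; -14757368; 19802032; 14968624; -12909528; -13073016; 9294832; 12347232; -6006880; -11876896; 2188280; 9922064; 507112; -7198088; -1427176; 5213424; 1670016; -4021640; -2059312; 2835232; 2257984; -1603864; -1969616; 742024; 1467152; -339528; -1106680; 106376; 861608; 97344; -604640; -212208; 350512; 204736; -184400; -154784; 98984; 116400; -48648; -89936; 9488; 58256; 9488; -30160; -11928; 13056; 8152; -5728; -5520; 1912; 3464; 64; -1672; -680; 368; 360; 16; -96; -48; -8]; [:: 0; 0; 0; 0; 0; 0; 0; 0; 0; 0; 0; 0; 0; 0; 0; 0; 0; 0; 0; 0; 0; 0; 0; 0; 0; 0; 0; 0; 0; 0; 0; 0; 0; 0; 0; 0; 0; 0; 0; 0; 0; 0; 0; 0; 0; 0; 0; 0; 0; 0; 0; 0; 0; 0; 0; 0; 0; 0; 0; 0; 0; 0;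 0; 0; 0; 0; 0; 0; 0; 0; 0; 0; 0; 0; 0; 0; 0; 0; 0; 0; 0; 0; 0; 0; 0; 16; 64; 16; -256; -272; 464; 896; -256; -1600; -464; 2128; 992; -3584; -2096; 7152; 8976; -7792; -23680; -4768; 32640; 30208; -17600; -47040; -4256; 46224; -6656; -68448; 16704; 150144; 84704; -215472; -285552; 126640; 383264; 78000; -325280; -138080; 425184; 38304; -808896; -292480; 979072; 1180720; -560736; -1880992; 42320; 1561264; 57664; -1301520; -216320; 2695568; 1198400; -4217136; -2852752; 2889216; 4521152; -116064; -5505024; 350512; 5657584; -2183584; -6604848; -782592; 9661168; 7631040; -11498080; -10451600; 7785744; 8980288; -2733456; -11587920; 4414096; 19671568; -7776672; -24500464; -652096; 22871168; 16615776; -21267168; -21041824; 22125616; 13412160; -23490752; -18335664; 21375568; 42866336; -13187760; -58275568; 1444016; 43574720; 9025600; -28021056; -12290544; 49078864; 16274064; -76750096; -37668384; 58449616; 65304992; -11458544; -68415616; 6677744; 54136528; -44807488; -62763536; 39616048; 107006848; 33462992; -115562176; -79074816; 63965744; 45414368; -45439776; -11151600; 82234880; 72797888; -106073600; -177239040; 39205248; 144646272; 42849200; -61059600; -26195536; 84302480; -28532592; -187984176; -28557152; 207425440; 163911824; -65820992; -178272272; 11621792; 95356544; -94434432; -95335136; 146153232; 237792688; -17188768; -294864496; -139041824; 183521280; 91623744; -102359920; -8077872; 190591648; 88080272; -285330720; -265104176; 168115216; 289803216; -15706336; -164774592; 27504592; 155895792; -127260336; -300633648; 63090992; 353209152; 121628624;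 -233385648; -168069472; 128825984; 72609008; -196022320; -61679888; 265627168; 202141952; -168714400; -278275152; 33347536; 191240048; -22675520; -113139648; 92858944; 176948448; -57254048; -245566384; -60107792; 184765376; 100465552; -79537328; -41953968; 77784096; 18909568; -130002576; -80388496; 105508864; 122067776; -20475776; -79679424; -9838688; 28887776; -27052400; -42191152; 35856304; 71465744; 8106256; -53045568; -37450688; 7817616; 14159888; 1291008; 9983568; 18067200; 1666528; -19063120; -20276288; -4166384; 10817184; 15601296; 9944384; -3814992; -11935584; -5960320; 1294560; -210752; -735920; 7257232; 10399600; -2215168; -13691840; -5994384; 7732736; 6488384; -3267104; -2584272; 5141696; 2864224; -6654864; -6169984; 3958736; 6983696; -527392; -4735552; -52128; 3206512; -610336; -3483472; 59360; 3551760; 1192224; -2436400; -1561712; 1260704; 1103536; -869664; -815696; 792160; 903136; -473712; -893136; 67152; 617424; 95568; -350992; -72880; 241584; 61632; -195888; -100224; 116720; 108144; -37264; -71440; 2688; 34784; -416; -20608; -208; 15648; 5040; -8528; -6752; 1584; 4000; 1120; -1040; -832; -48; 192; 96; 16]; [:: 0; 0; 0; 0; 0; 0; 0; 0; 0; 0; 0; 0; 0; 0; 0; 0; 0; 0; 0; 0; 0; 0; 0; 0; 0; 0; 0; 0; 0; 0; 0; 0; 0; 0; 0; 0; 0; 0; 0; 0; 0; 0; 0; 0; 0; 0; 0; 0; 0; 0; 0; 0; 0; 0; 0; 0; 0; 0; 0; 0; 0; 0; 0; 0; 0; 0; 0; 0; 0; 0; 0; 0; 0; 0; 0; 0; 0;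 0; 0; 0; 0; 0; 0; 0; 0; 0; 0; 0; 0; 0; 0; 0; 0; 0; 0; 0; 0; 0; 0; 0; 8; 24; -32; -184; -72; 480; 424; -968; -1352; 1504; 2984; -2568; -6592; 3816; 14456; -2336; -27608; -6376; 43528; 24024; -59608; -50648; 78112; 93240; -101584; -172216; 105608; 285856; -62768; -414696; -32928; 544608; 165928; -696552; -375384; 869504; 758448; -952248; -1292912; 841168; 1850456; -564384; -2428120; 154848; 3122544; 500344; -3954656; -1774840; 4475424; 3523560; -4457152; -5348328; 4041720; 7271680; -3333760; -9712656; 1987704; 12680928; 863112; -15024328; -5101024; 16096944; 9553104; -16831568; -14424584; 16924080; 20335440; -15670016; -28294688; 11451528; 35631192; -4891296; -39976176; -2557136; 44448712; 11915696; -48936680; -22218272; 51664208; 36687360; -48209528; -51814608; 41033024; 63796896; -34918296; -74489440; 24403480; 85030256; -8418880; -99666216; -9417248; 102846824; 28674544; -96678208; -50326000; 98299728; 67632216; -95270024; -86450880; 82323136; 106174672; -62905952; -124686976; 41182744; 129916064; -34910208; -131314936; 3842936; 141481256; 18019088; -146110488; -32929944; 128783208; 63191384; -118921224; -61107440; 115719712; 87353032; -96553304; -97843352; 96095840; 100528448; -61290008; -106340960; 55632264; 104205872; -53986568; -112684816; 32605128; 108002120; -31395848; -105283888; 4973304; 102270680; -15681864; -107428248; 9754400; 101220360; 7292240; -102468568; -12804512; 101073712; 20485536; -99770512; -19773192; 100878736; 36148592; -94385120; -50507512; 93180808; 55822504; -84560144; -61978560; 77541240; 73422496; -67552648; -83967752;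 55271888; 89230704; -41351200; -88022848; 27891976; 90213880; -13818752; -90491448; -231608; 85321384; 13498360; -76512320; -24820984; 66679528; 32731680; -58523072; -40145648; 46960824; 44507040; -34439192; -46284568; 22802744; 45072016; -13351136; -42543376; 4870528; 39109488; 3246928; -33848720; -9294632; 27636960; 12876648; -21640168; -14889824; 16179984; 15979952; -11056640; -16078880; 6207736; 14753072; -2436400; -12746936; -198456; 10683584; 2051872; -8661664; -3378944; 6535440; 4047384; -4515168; -4072792; 2885504; 3716216; -1711672; -3279720; 784000; 2738696; -102904; -2130952; -317656; 1531224; 486088; -1057032; -528392; 697104; 510968; -413856; -443552; 203752; 339560; -76712; -237312; 12624; 158136; 17648; -100744; -31536; 56112; 30968; -25864; -22496; 9664; 13592; -2784; -7632; -8; 3952; 1048; -1528; -936; 272; 408; 56; -88; -48; -8]; [:: 0; 0; 0; 0; 0; 0; 0; 0; 0; 0; 0; 0; 0; 0; 0; 0; 0; 0; 0; 0; 0; 0; 0; 0; 0; 0; 0; 0; 0; 0; 0; 0; 0; 0; 0; 0; 0; 0; 0; 0; 0; 0; 0; 0; 0; 0; 0; 0; 0; 0; 0; 0; 0; 0; 0; 0; 0; 0; 0; 0; 0; 0; 0; 0; 0; 0; 0; 0; 0; 0; 0; 0; 0; 0; 0; 0; 0; 0; 0; 0; 0; 0; 0; 0; 0; 0; 0; 0; 0; 0; 0; 0; 0; 0; 0; 0; 0; 0; 0; 0; 0; 0; 0; 0; 0; 0; 0; 0; 0; 0; 0; 0; 0; 32; 96; -64; -400; 80; 1040; 48; -1920;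 -384; 3392; 1376; -6480; -4480; 10432; 11568; -10016; -21616; 3008; 30576; 2112; -35936; -1680; 43776; 21008; -57792; -73216; 58784; 107232; -11328; -90544; -66368; 109232; 86640; -192752; -74720; 155456; 246032; 47040; -559248; -104528; 521632; 44816; -146160; -388848; 338176; 932016; -1001024; -867296; 512688; 775312; 972208; -1652560; -830336; 2202560; -436928; -998640; -1051056; 473088; 4324096; -2139328; -3852688; 1731664; 1353024; 2141376; -3865296; -3431904; 8167600; 1390704; -6254656; -3547696; 2053264; 10228272; -3186912; -12952560; 6535904; 10804352; -3056800; -12178608; -5920784; 19470848; 9215296; -24004944; -8310576; 19441584; 13301248; -13999664; -27263008; 17378384; 38770816; -20589808; -33550544; 8572112; 40387488; 11577136; -57538560; -10337952; 61065008; 20334112; -55967536; -41393264; 52780416; 58530512; -52420912; -84153744; 49171360; 85342272; -34949024; -103879872; 1232800; 126344048; 8136864; -136557696; -29091824; 135400192; 61646480; -128769824; -96346672; 133259232; 131316912; -120851744; -142715264; 97294352; 175971296; -64384704; -200416304; 41037952; 217996336; -8798976; -220791184; -31346672; 215509760; 73603792; -216764032; -108256496; 202365824; 134858912; -177106064; -168617488; 144971696; 193112192; -114628272; -207343376; 82038448; 211037040; -45038160; -212252096; 6166912; 207680576; 26600368; -192241152; -54551696; 169080800; 76825840; -146328064; -96001744; 121971488; 108975856; -94480448; -114228192; 65005216; 112800176; -39530432; -106722160; 19759024; 98979392; -1073536; -87550864; -14855856; 73197184; 26383296; -57208720; -31380480; 43474416; 33576320; -31400816; -34476096; 19963472; 33153280;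 -9424784; -28725904; 1803648; 23022864; 2658192; -18097728; -5560160; 13847728; 7782336; -9338048; -8659584; 4975312; 7843296; -1898560; -6342896; 150320; 5061552; 1014080; -3960800; -1988560; 2613520; 2401248; -1280768; -2176304; 386832; 1706736; 51472; -1341168; -330960; 1032752; 558992; -660496; -628256; 305792; 527344; -89120; -380704; -2000; 277280; 53792; -197664; -91264; 115680; 96272; -46240; -70144; 11136; 42176; -96; -25712; -4176; 16144; 7552; -7312; -7152; 960; 3856; 1232; -960; -816; -48; 192; 96; 16]; [:: 0; 0; 0; 0; 0; 0; 0; 0; 0; 0; 0; 0; 0; 0; 0; 0; 0; 0; 0; 0; 0; 0; 0; 0; 0; 0; 0; 0; 0; 0; 0; 0; 0; 0; 0; 0; 0; 0; 0; 0; 0; 0; 0; 0; 0; 0; 0; 0; 0; 0; 0; 0; 0; 0; 0; 0; 0; 0; 0; 0; 0; 0; 0; 0; 0; 0; 0; 0; 0; 0; 0; 0; 0; 0; 0; 0; 0; 0; 0; 0; 0; 0; 0; 0; 0; 0; 0; 0; 0; 0; 0; 0; 0; 0; 0; 0; 0; 0; 0; 0; 0; 8; 40; 40; -128; -288; 136; 864; 256; -1664; -1248; 2656; 2944; -4520; -6888; 7168; 16848; -5720; -33432; -7360; 49408; 33504; -56216; -65320; 59464; 108192; -63080; -186456; 33112; 298888; 82144; -386768; -275384; 398424; 487816; -361688; -731560; 302992; 1114792; -74872; -1597712; -501288; 1936744; 1368320; -1963728; -2302784; 1792824; 3356944; -1474040; -4828032; 582896; 6538904; 1374352; -7767904; -4224872;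 8206480; 7432424; -8025984; -10909016; 7191952; 15438536; -4732320; -20800728; -95080; 25302600; 7218768; -27672784; -16144864; 28369656; 26273144; -28039912; -37716952; 24464864; 51280744; -14599432; -65622296; -291296; 76589200; 18841232; -81514312; -40642568; 84516088; 66862848; -85333800; -98665536; 75604464; 131829104; -50632784; -161674736; 16503944; 184356424; 16740304; -201722200; -60323144; 218428656; 122123152; -220553088; -189216000; 194453656; 251628448; -155633376; -299539888; 114285976; 352016136; -57788776; -411039200; -28752352; 439092936; 140038712; -435349008; -231261048; 408206728; 315541968; -378962776; -422821200; 343073128; 528265384; -230312024; -609527304; 101765448; 643583240; 9131928; -651908400; -129341360; 682738656; 262535416; -661685984; -441102704; 569810176; 568993080; -462410888; -642621344; 343044256; 722335400; -242451488; -801709648; 65871968; 844078512; 131188320; -805607608; -275417016; 723585896; 407176872; -667155640; -526065568; 587482064; 670704824; -436101208; -756884952; 261669056; 770246584; -105343328; -771288352; -10513976; 767125656; 156780512; -733394200; -319779184; 637852320; 432800584; -514909120; -494062912; 412214216; 534751696; -310382784; -585116520; 183258408; 600789704; -49204176; -560729392; -58152976; 500368728; 130372912; -448868880; -198425224; 392143520; 262825616; -309550472; -301074480; 216459864; 305419776; -142336312; -294722912; 84720432; 284028728; -26379984; -263342352; -30064456; 225658120; 69681080; -180730680; -88556688; 142655560; 99960832; -109579152; -108863336; 75217056; 109662536; -41779312; -99630232; 16632024; 85190944; -482712; -72333928; -11734960; 59876432; 21689280; -45633984; -27047936; 31568408; 27317664; -20638280; -25208496; 12831928; 22832064; -6442440;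 -19868264; 1179752; 15852696; 2122264; -11711048; -3557576; 8381208; 4041208; -5863824; -4177264; 3732192; 3900752; -1989896; -3207976; 843728; 2413816; -219440; -1759872; -126080; 1245584; 326192; -805336; -387968; 453712; 335672; -230440; -251088; 106344; 178072; -37024; -121240; -3584; 71936; 18720; -35608; -17704; 14824; 11696; -5552; -7144; 1240; 3832; 424; -1656; -776; 320; 352; 16; -96; -48; -8]; [:: 0; 0; 0; 0; 0; 0; 0; 0; 0; 0; 0; 0; 0; 0; 0; 0; 0; 0; 0; 0; 0; 0; 0; 0; 0; 0; 0; 0; 0; 0; 0; 0; 0; 0; 0; 0; 0; 0; 0; 0; 0; 0; 0; 0; 0; 0; 0; 0; 0; 0; 0; 0; 0; 0; 0; 0; 0; 0; 0; 0; 0; 0; 0; 0; 0; 0; 0; 0; 0; 0; 0; 0; 0; 0; 0; 0; 0; 0; 0; 0; 0; 0; 0; 0; 0; 0; 0; 0; 0; 0; 0; 0; 0; 0; 0; 0; 0; 0; 0; 0; 0; 0; 0; 0; 0; 0; 0; 0; 0; 0; 0; 0; 0; -16; -64; -16; 256; 288; -400; -864; 64; 1360; 736; -1520; -1168; 2544; 2224; -5248; -9248; 3472; 22272; 12448; -24448; -37552; 400; 48288; 25536; -40560; -18304; 55776; 28064; -110944; -149488; 114000; 313440; 41888; -321840; -274832; 209168; 350208; -257456; -317552; 402112; 638752; -164880; -1368768; -489520; 1615088; 1066544; -884480; -1510304; 405328; 2156272; -1075008; -2978128; 900832; 3881408; 1851808; -4904240; -4684240; 4960944; 4999648; -3001216;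 -5683248; 1218672; 9870336; -1473072; -13820000; -730448; 13590176; 8947536; -12379872; -16646112; 12301952; 17638224; -10361600; -19311584; 5372512; 29902944; 1747120; -40914272; -11827520; 39283552; 25216528; -29283680; -37021840; 26733488; 46022896; -31666256; -60086928; 23079344; 77351520; 8591424; -87329984; -38224272; 85055232; 43283488; -75879536; -53291024; 78393184; 96860176; -79053600; -139816752; 43650064; 149693808; 1698080; -140197536; -24396016; 147852608; 39654320; -185815712; -85678944; 180163968; 155208400; -122644000; -195461552; 81812112; 194043728; -74617232; -208712432; 60173440; 264042064; 25595872; -285934640; -112883904; 247253648; 142284784; -197048288; -151172576; 199577936; 203388704; -197974272; -289731920; 124417040; 311777760; -31193232; -277613632; -14606240; 266588224; 18031520; -297956128; -74331104; 297945264; 166075888; -229514288; -209629104; 159322496; 193838864; -143695808; -191261280; 132414384; 235750624; -72144864; -253872976; -4903696; 211478816; 35954624; -162783888; -29736048; 157466832; 49850928; -158378192; -91942688; 117887072; 108405616; -61406752; -84806448; 40113232; 65265232; -42900272; -72083664; 28242352; 74888352; 4086432; -51439264; -17755360; 23080800; 6154064; -15719120; 1730928; 18593488; 5794992; -10286480; -10638624; -5613792; -314016; 9949792; 12618416; -3201696; -13972272; -1002032; 10321296; -2018432; -12812224; 2721616; 18214480; 3041616; -18112400; -8684320; 13255216; 9414416; -9912208; -8301008; 9496416; 9399200; -8085216; -11143936; 4498096; 10680496; -1284704; -8508384; 77136; 6916800; 435120; -6154400; -1412528; 5116176; 2386688; -3490224; -2515616; 2118336; 2099456; -1369760; -1762016;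 892256; 1581760; -388928; -1301792; -22608; 892400; 182288; -555264; -186752; 360736; 176720; -235216; -177120; 120080; 147664; -35904; -94192; 320; 50336; 5472; -28736; -7104; 17008; 8944; -7424; -7792; 752; 3952; 1312; -944; -816; -48; 192; 96; 16]].
Definition V_msq : list (list Z) := [:: [:: 0; 0; 0; 0; 0; 0; 0; 0; 0; 0; 0; 0; 0; 0; 0; 0; 0; 0; 0; 0; 0; 0; 0; 0; 0; 0; 0; 0; 0; 0; 0; 0; 0; 0; 0; 0; 0; 0; 0; 0; 0; 0; 0; 0; 0; 0; 0; 0; 0; 0; 0; 0; 0; 0; 0; 0; 0; 0; 0; 0; 0; 0; 0; 0; 0; 0; 0; 0; 0; 0; 0; 0; -8; -48; -88; 48; 360; 184; -896; -1200; 1216; 3120; -1240; -6680; 744; 14184; 2816; -28904; -18232; 47472; 54904; -58120; -114704; 49080; 193224; -21104; -308152; -49880; 475240; 225984; -665400; -575344; 778960; 1082248; -750576; -1711032; 571072; 2521600; -134880; -3579568; -854352; 4679936; 2603304; -5437936; -5038616; 5591264; 7964624; -5173680; -11675600; 3693656; 16247176; -294616; -20997856; -5656928; 24669488; 13822016; -26822288; -23812072; 27380056; 36134048; -24966648; -51438392; 17079528; 67929360; -3139224; -82667256; -16972976; 93398112; 42846200; -101696648; -75604688; 104926240; 114457600; -96258696; -158341688; 72310808; 204013832; -35897432; -243764392; -10547512; 275292256; 74624344; -300678552; -158105184; 315275896; 249987600; -300283840; -347108296; 249669472; 446403896; -185805864; -539459184; 103745800; 620505632; 17688304; -685627296; -181918216;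 720095168; 357506752; -707203600; -517255112; 647144048; 690063744; -572499720; -878791472; 446654608; 1042098376; -244341256; -1168318744; 11157768; 1204133664; 226798864; -1227652648; -471673464; 1236638744; 739535384; -1130316040; -1042801080; 950181096; 1272122232; -687409392; -1414806728; 456323128; 1556060360; -201554680; -1636659776; -185723896; 1685378832; 558812008; -1559489040; -866029680; 1342507184; 1116544768; -1186684488; -1350712864; 931705784; 1620485216; -603158232; -1749922256; 184314360; 1719668160; 180158544; -1668897680; -431895184; 1586509472; 772333768; -1468194824; -1104800488; 1186779720; 1337884376; -822409608; -1449307088; 560104512; 1475807104; -295293000; -1538110464; -28776392; 1529118792; 381082728; -1367969952; -643322952; 1148023576; 782800936; -949976544; -921179480; 778628048; 1062681304; -533199608; -1124307424; 239729136; 1074856672; -16727712; -977165112; -133878584; 900121688; 275962224; -807592656; -432717264; 650265296; 536256648; -468689888; -553788168; 321762248; 539610224; -210742728; -534612248; 94332760; 511760408; 26343640; -443042504; -112837312; 352582488; 153180840; -280548904; -177046464; 221910128; 199827576; -155850768; -208083776; 86161856; 190240304; -34506576; -160693984; 4347272; 136224984; 18602896; -114313808; -39671560; 87327568; 51856080; -58539440; -51839008; 36711936; 46555768; -22498560; -41855160; 10966376; 36688232; -649064; -28816152; -5748200; 20329464; 7905816; -13803008; -8057696; 9409144; 8035824; -5646224; -7378784; 2478912; 5853840; -480696; -4091816; -350544; 2801376; 702040; -1897728; -893456; 1147440; 899424; -531504; -689792; 185232; 456624; -35200; -288952; -24416; 185400; 61144; -98416; -63224; 37984; 44184; -7896;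 -22928; -144; 11672; 2520; -5368; -2648; 1968; 2104; 104; -688; -272; 128; 152; 56; 8]; [:: 0; 0; 0; 0; 0; 0; 0; 0; 0; 0; 0; 0; 0; 0; 0; 0; 0; 0; 0; 0; 0; 0; 0; 0; 0; 0; 0; 0; 0; 0; 0; 0; 0; 0; 0; 0; 0; 0; 0; 0; 0; 0; 0; 0; 0; 0; 0; 0; 0; 0; 0; 0; 0; 0; 0; 0; 0; 0; 0; 0; 0; 0; 0; 0; 0; 0; 0; 0; 0; 0; 0; 0; 0; 0; 0; 0; 0; 0; 0; 0; 0; 0; 0; 0; 16; 80; 80; -256; -592; 192; 1648; 736; -2864; -2768; 3984; 5552; -6752; -12192; 10944; 30400; -5936; -59760; -23216; 80272; 71744; -75856; -115472; 72624; 165696; -96272; -289968; 62496; 488224; 150704; -616384; -479920; 551728; 709392; -430032; -897760; 446800; 1411664; -339680; -2186368; -459168; 2546032; 1843584; -2245664; -2847408; 1850016; 3211552; -1644032; -4441408; 862016; 7039600; 1144256; -8419680; -4274704; 6839088; 7746912; -5200384; -10058432; 5700304; 11505776; -4260368; -15300384; -2292256; 20698912; 9212800; -20759456; -13702896; 13307776; 19342912; -9416928; -26836048; 12233520; 31251536; -5289504; -35212432; -15454736; 40653616; 30127136; -34749792; -32015440; 19852512; 38019136; -14591568; -55803472; 12457088; 70476336; 9895392; -68780384; -48196192; 55239232; 65406624; -39327248; -62249216; 36362112; 81971968; -31256336; -110944880; -13253632; 130233888; 69708128; -113346256; -81906464; 64801504; 87191616; -75040208; -129172000; 86009744; 171427360;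 -32384272; -205473024; -56251904; 168128752; 94043136; -145062848; -76663168; 172684912; 110598432; -165243792; -206636016; 122043376; 263567840; -20313472; -213275712; 3414560; 186447456; -8471792; -227741360; -45497648; 281673424; 130688080; -211961152; -191125232; 107710928; 153597312; -108186816; -141631376; 132357920; 200080144; -104052880; -236852240; -17391808; 190282560; 58222336; -124435616; -6016544; 120019152; -1503840; -158017088; -63711072; 125663472; 109988768; -50856768; -59764912; 25427952; 1913424; -60049232; -24693040; 75922544; 62237712; -29575008; -36960448; 4194656; -16107696; -37758176; 21600688; 77397328; 20239456; -64920576; -29371136; 39839344; 4117744; -52668416; 2264880; 84055264; 30521088; -81905616; -58256432; 53396848; 53404928; -41447312; -44498672; 49884352; 57749168; -46207680; -75946432; 21402912; 73840752; -755552; -59365536; -2915312; 53046560; 4192992; -55084016; -15997392; 49324064; 27890672; -35016800; -29892928; 22839904; 25684208; -18116720; -24900992; 13773168; 26133968; -6193008; -23874224; -785840; 18078944; 3401472; -13338016; -3780864; 10883456; 4799792; -8548112; -6044720; 5299552; 5832128; -2555120; -4494240; 1228624; 3387568; -606288; -2789600; -40368; 2178048; 603120; -1357904; -715120; 715120; 553280; -392944; -407824; 235472; 346432; -85008; -262944; -25168; 148976; 54608; -63728; -36624; 29920; 22960; -16864; -19216; 5280; 14192; 3184; -5936; -4304; 448; 1808; 672; -240; -304; -112; -16]; [:: 0; 0; 0; 0; 0; 0; 0; 0; 0; 0; 0; 0; 0; 0; 0; 0; 0; 0; 0; 0; 0; 0; 0; 0; 0; 0; 0; 0; 0; 0; 0;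 0; 0; 0; 0; 0; 0; 0; 0; 0; 0; 0; 0; 0; 0; 0; 0; 0; 0; 0; 0; 0; 0; 0; 0; 0; 0; 0; 0; 0; 0; 0; 0; 0; 0; 0; 0; 0; 0; 0; 0; 0; 0; 0; 0; 0; 0; 0; 0; 0; 0; 0; 0; 0; 0; 0; 8; 48; 80; -88; -408; -112; 1040; 976; -1768; -2832; 2472; 6096; -3848; -13656; 4048; 29536; 4472; -52864; -31160; 74352; 77040; -87104; -138808; 97200; 234760; -96616; -398368; 29368; 616952; 166088; -825864; -500776; 972104; 939040; -1083224; -1542072; 1109504; 2427528; -830160; -3563680; 31920; 4708728; 1312752; -5625672; -3162456; 6319384; 5682000; -6737128; -9097928; 6232912; 13167672; -4135088; -17595344; 183688; 21821632; 5179224; -25380880; -12384280; 27714696; 22392376; -28254600; -34751704; 25864152; 47859552; -18665448; -60972896; 6293376; 73974032; 9355168; -85899200; -30029872; 92616304; 57392352; -93996184; -90952032; 88050832; 123848368; -73085936; -154783232; 48045336; 188084280; -12056992; -218988360; -32902488; 238952256; 90311216; -241921648; -154514080; 234175792; 219798744; -217322640; -287511504; 179549152; 352066880; -115006056; -410848976; 33166800; 452074384; 51022080; -468156240; -146279544; 472890928; 263534736; -454871424; -379702792; 403019768; 477454240; -318267200; -562550168; 212365528; 634748648; -112885272; -694480192; -37025304; 705233864; 189626008; -694350784; -332891464; 628938192; 466575384; -562190112; -585369912; 471059856; 699088472; -307466184; -774402216; 166454984; 812690424; 310120; -794836760; -141927664; 787408752; 306425224; -721707256; -459073648; 623825440;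 565527656; -489898120; -646111272; 353879424; 699639008; -233909728; -733347432; 68507032; 722524168; 77569328; -675035216; -204145976; 595757176; 295605992; -521170840; -378529984; 421458904; 447631184; -307714608; -477540352; 188523120; 469046024; -87815664; -448005512; 4476104; 417502888; 78194960; -368809368; -146875456; 300536024; 190157528; -228113696; -207686552; 168550144; 216585504; -110336424; -216694048; 53419040; 202765536; -2730264; -172991016; -30302512; 142084144; 51353952; -114273928; -67111032; 86202320; 76957192; -56133872; -76893384; 29776176; 68768680; -11985808; -59481568; -827488; 50399096; 11361992; -39989168; -18754264; 28051856; 20953280; -17938048; -19898344; 10820744; 18069728; -5528520; -16110296; 833288; 12987504; 2287552; -9422368; -3640456; 6351608; 3771752; -4310504; -3753880; 2611352; 3464008; -1192384; -2828240; 216448; 1998896; 190536; -1374096; -355856; 930680; 428120; -590480; -449504; 281304; 347952; -108920; -238024; 25328; 148856; 1512; -102272; -26232; 57072; 30480; -24976; -23576; 6328; 11816; -2136; -6920; -200; 3640; 816; -2032; -1480; 128; 552; 120; -184; -160; -56; -8]; [:: 0; 0; 0; 0; 0; 0; 0; 0; 0; 0; 0; 0; 0; 0; 0; 0; 0; 0; 0; 0; 0; 0; 0; 0; 0; 0; 0; 0; 0; 0; 0; 0; 0; 0; 0; 0; 0; 0; 0; 0; 0; 0; 0; 0; 0; 0; 0; 0; 0; 0; 0; 0; 0; 0; 0; 0; 0; 0; 0; 0; 0; 0; 0; 0; 0; 0; 0; 0; 0; 0; 0; 0; 0; 0; 0; 0; 0; 0; 0; 0; 0; 0; 0; 0; 0;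 0; 0; 0; 0; 0; 0; 0; 0; 0; 0; 0; 0; 0; -16; -80; -80; 240; 528; -176; -1280; -512; 1824; 1696; -2016; -2688; 3760; 6064; -6320; -17312; -528; 32128; 25920; -29968; -55280; 1168; 63328; 23088; -70000; -21584; 131056; 77520; -202720; -280112; 138736; 515056; 93232; -551696; -315968; 482384; 448880; -692480; -766352; 1021008; 1521952; -647184; -2434816; -508240; 2911456; 1388848; -2788320; -1754160; 2828656; 3143280; -3483536; -6008704; 3266480; 8366800; -341840; -9334816; -3807600; 10408080; 5948016; -11712000; -7617520; 11699376; 14188912; -10028512; -23658880; 6883200; 28226096; 257792; -28013456; -10070800; 31172640; 16951968; -37627232; -24556928; 37649024; 41223024; -28207840; -60595680; 15278192; 68607696; -3976000; -68538192; -6467680; 77747184; 24984448; -93670496; -57130288; 90818864; 87225104; -66467216; -102202816; 41787008; 111774160; -37233232; -139045632; 27340656; 168106560; 28751248; -166486464; -88432448; 149958112; 109294112; -126359216; -110593424; 133321888; 161296256; -118457776; -224801216; 51397648; 242578208; 9427344; -213197584; -37226240; 196336688; 47009456; -243381152; -115717168; 236321568; 190377728; -166188336; -220209904; 91474848; 200959248; -88949152; -211722816; 89371232; 263993696; -7377200; -270793120; -81501216; 214877568; 107970944; -161253984; -82162960; 171061136; 113829856; -166539520; -180862752; 105332416; 195024720; -26821360; -143217600; 11846352; 116182192; -23409376; -139729168; -6835328; 144898400; 62575360; -92035456; -77324912; 39300544; 44924224; -38933680; -34758784; 48016272; 56351520; -23379552; -63777104; -17301360; 31320432; 20850960; -4070192;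 -1801472; 6784080; -1446832; -15813536; -15400704; 832928; 17454112; 18618880; 216736; -18299776; -12951520; 6098512; 8866176; -4052224; -4152304; 11318368; 11490928; -10081056; -18752256; 819776; 16910688; 5587168; -10100976; -3835584; 8866768; 2983296; -10223248; -6101664; 8510256; 9030256; -3719824; -7784256; 972944; 5407008; -764496; -4687776; 476144; 4834352; 1041248; -3790176; -2066656; 2087280; 1829968; -1092544; -1283376; 823264; 1146112; -555056; -1164928; 52560; 862192; 228864; -471136; -224272; 245008; 140256; -183552; -140720; 113456; 145168; -25664; -101456; -22032; 43312; 18496; -17616; -8432; 12096; 7600; -7536; -8896; 480; 5392; 2624; -1040; -1552; -368; 352; 320; 112; 16]].
Definition R_msq : list Z := [:: 0; 0; 0; 0; 0; 0; 0; 0; 0; 0; 0; 0; 0; 0; 0; 0; 0; 0; 0; 0; 0; 0; 0; 0; 0; 0; 0; 0; 0; 0; 0; 0; 0; 0; 0; 0; 0; 0; 0; 0; 0; 0; 0; 0; 0; 0; 0; 0; 0; 0; 0; 0; 0; 0; 0; 0; 0; 0; 0; 0; 0; 0; 0; 0; 0; 0; 0; 0; 0; 0; 0; 0; 16; 96; 176; -96; -720; -352; 1856; 2432; -2640; -6496; 2944; 14336; -2160; -30976; -4944; 64032; 36944; -108224; -115248; 141568; 249136; -139520; -435568; 102272; 721392; 27200; -1152160; -391168; 1681472; 1156896; -2104864; -2320768; 2294224; 3855200; -2245664; -5979552; 1697952; 8961472; 144880; -12400256; -3881072; 15438240; 9434464; -17540800; -16523920; 18966944; 26305024; -18496384; -39589664;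 13456640; 55006144; -1805280; -69501520; -15821184; 82189440; 39186720; -93665904; -71201312; 100880400; 115105856; -95382992; -166961024; 73412752; 220880448; -35061376; -272456256; -18941232; 324369088; 97759552; -370911936; -206926352; 395829344; 339926256; -384911392; -487572928; 335883808; 643619712; -254864192; -806413392; 128174560; 967277904; 69599488; -1104540112; -334603648; 1193609504; 640103136; -1213098080; -966048000; 1162799616; 1328573120; -1047470464; -1738712416; 827580288; 2126501920; -466198896; -2439834400; -16358960; 2669064448; 546117216; -2832755808; -1116800208; 2921287040; 1813040784; -2790586656; -2590533168; 2466828096; 3309087552; -1995151616; -3832025152; 1407829856; 4341504848; -679695456; -4853403328; -281328000; 5125896000; 1348049152; -5027792416; -2368469184; 4651156336; 3352117664; -4324867984; -4310278752; 3752410576; 5272411328; -2722028880; -6046582176; 1466453312; 6324413504; -231843008; -6533304320; -869623840; 6528620960; 2141716048; -6249807520; -3746146864; 5551316000; 4883927920; -4444190080; -5670885312; 3418374624; 6298182064; -2229149056; -6882437264; 790136768; 7358907104; 790136768; -6882437264; -2229149056; 6298182064; 3418374624; -5670885312; -4444190080; 4883927920; 5551316000; -3746146864; -6249807520; 2141716048; 6528620960; -869623840; -6533304320; -231843008; 6324413504; 1466453312; -6046582176; -2722028880; 5272411328; 3752410576; -4310278752; -4324867984; 3352117664; 4651156336; -2368469184; -5027792416; 1348049152; 5125896000; -281328000; -4853403328; -679695456; 4341504848; 1407829856; -3832025152; -1995151616; 3309087552; 2466828096; -2590533168; -2790586656; 1813040784; 2921287040; -1116800208; -2832755808; 546117216;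 2669064448; -16358960; -2439834400; -466198896; 2126501920; 827580288; -1738712416; -1047470464; 1328573120; 1162799616; -966048000; -1213098080; 640103136; 1193609504; -334603648; -1104540112; 69599488; 967277904; 128174560; -806413392; -254864192; 643619712; 335883808; -487572928; -384911392; 339926256; 395829344; -206926352; -370911936; 97759552; 324369088; -18941232; -272456256; -35061376; 220880448; 73412752; -166961024; -95382992; 115105856; 100880400; -71201312; -93665904; 39186720; 82189440; -15821184; -69501520; -1805280; 55006144; 13456640; -39589664; -18496384; 26305024; 18966944; -16523920; -17540800; 9434464; 15438240; -3881072; -12400256; 144880; 8961472; 1697952; -5979552; -2245664; 3855200; 2294224; -2320768; -2104864; 1156896; 1681472; -391168; -1152160; 27200; 721392; 102272; -435568; -139520; 249136; 141568; -115248; -108224; 36944; 64032; -4944; -30976; -2160; 14336; 2944; -6496; -2640; 2432; 1856; -352; -720; -96; 176; 96; 16].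
Definition U_neg : list (list Z) := [:: [:: 0; 0; 0; 0; 0; 0; 0; 0; 0; 0; 0; 0; 0; 0; 0; 0; 0; 0; 0; 0; 0; 0; 0; 0; 0; 0; 0; 0; 0; 0; 0; 0; 0; 0; 0; 0; 0; 0; 0; 0; -8; 8; 48; -56; -112; 168; 176; -352; -248; 640; 472; -1168; -888; 2136; 704; -3144; -888; 4728; 1088; -6912; -2752; 10640; 1000; -14296; 1456; 18152; 1264; -23880; -1008; 31248; 1040; -41704; 15648; 49096; -8024; -55824; 4872; 65464; -19192; -83640; 31880; 97896; -54040; -97904; 17704; 97832; -53832; -122288; 80760; 145768; -82536; -128304; 88808; 112504; -59808; -128288; 140888; 164336; -120136; -139480; 111552; 88496; -119608; -112976; 116424; 134968; -165504; -121272; 107616; 60584; -121632; -58024; 117880; 102464; -114992; -65960; 115344; 36944; -79768; -19608; 89328; 45848; -73696; -40392; 69840; 2112; -54904; -11016; 43592; 10440; -40160; -15208; 32528; -832; -26376; 2256; 18176; 4840; -15536; -64; 11920; -40; -9048; 2528; 5632; 576; -4392; 400; 3176; -856; -2024; 480; 1256; -328; -784; 120; 568; -296; -272; 112; 144; -72; -64; 32; 32; -24; -8; 8]; [:: 0; 0; 0; 0; 0; 0; 0; 0; 0; 0; 0; 0; 0; 0; 0; 0; 0; 0; 0; 0; 0; 0; 0; 0; 0; 0; 0; 0; 0; 0; 0; 0; 0; 0; 0; 0; 0; 0; 0; 0; 0; 0; 0; 0; 0; 0; 0; 0; 0; 0; 0; 0; 16; -16; -96; 96; 224; -224; -336; 352;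 400; -448; -768; 672; 1744; -1360; -1696; 1328; 1904; -1680; -1648; 752; 6480; -1664; -6944; 1376; 4336; 64; -6608; -2912; 12944; 3920; -26096; -4832; 12864; 7120; -14912; -14032; 34032; 19552; -43872; -13200; 48016; 23712; -20080; -28816; 56064; 34592; -76032; -32848; 63120; 25344; -57968; -51904; 51136; 38592; -102160; -35408; 81888; 37440; -63088; -35936; 71072; 47088; -80576; -17024; 90544; 30192; -57776; -28288; 59120; 18672; -64880; -16544; 59520; 7824; -46080; -18128; 38192; 4304; -38096; -3840; 32800; 4240; -24592; -3776; 19776; 944; -18016; 1776; 13024; 1248; -10096; 208; 7520; -752; -6128; 1328; 3952; -48; -2800; 496; 2048; -528; -1360; 400; 816; -176; -528; 160; 352; -192; -160; 64; 80; -48; -32; 16; 16; -16]; [:: 0; 0; 0; 0; 0; 0; 0; 0; 0; 0; 0; 0; 0; 0; 0; 0; 0; 0; 0; 0; 0; 0; 0; 0; 0; 0; 0; 0; 0; 0; 0; 0; 0; 0; 0; 0; 0; 0; 0; 0; 0; 0; 0; 0; 0; 0; 0; 0; 0; 0; 0; 0; 0; 0; 8; -8; -56; 56; 160; -152; -296; 256; 472; -408; -840; 768; 1640; -1512; -2280; 1912; 2968; -2344; -4328; 4248; 6952; -6472; -9248; 8528; 9112; -6880; -11552; 12968; 18248; -19872; -21512; 21120; 20672; -21368; -17056; 19056; 30760; -46648; -37752; 38936; 26552; -34168; -20168; 38400; 30568; -47800; -48888; 77784; 25152; -29304; -10416; 48640; 22952; -57776; -42448; 63240; 21600; -59752; 7296;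 17264; 16880; -65400; -23664; 46432; 16432; -42344; 13176; 28912; 3144; -24120; -19128; 45656; -1520; -16472; 2832; 21696; -6040; -13856; -9704; 17584; -1064; -13872; 5840; 5192; 704; -9248; 440; 4632; 1008; -5544; 3328; 2104; 320; -2264; 184; 1832; -504; -952; 400; 760; -288; -328; -80; 384; -200; -144; 48; 96; -48; -40; 8; 24; -16; -8; 8]; [:: 0; 0; 0; 0; 0; 0; 0; 0; 0; 0; 0; 0; 0; 0; 0; 0; 0; 0; 0; 0; 0; 0; 0; 0; 0; 0; 0; 0; 0; 0; 0; 0; 0; 0; 0; 0; 0; 0; 0; 0; 0; 0; 0; 0; 0; 0; 0; 0; 0; 0; 0; 0; 0; 0; 0; 0; 0; 0; 0; 0; 0; 0; 0; 0; 0; 0; -16; 16; 96; -96; -208; 192; 256; -192; -224; 176; 368; -368; -1056; 1104; 608; -528; -112; -240; -512; -528; -464; 96; 1088; -2400; 4688; -5792; -2416; 1056; 4256; -1120; -1696; 6208; 7584; -2448; -14096; 18288; 1920; 1008; -14080; 14688; 8512; -16688; -18848; 9856; 13472; -26288; -6224; 4288; 24880; -30576; -6224; 14288; 18976; -17936; -8112; 24848; 11584; -10320; -13856; 24576; 784; -9104; -14256; 18992; 2224; -11760; -6160; 9264; 2480; -11008; -3232; 7024; 4176; -8432; 928; 3520; 1824; -5088; -512; 3088; 1104; -2992; 704; 1488; 272; -1472; -144; 1008; 0; -672; 224; 432; -32; -256; -16; 240; -112; -80; 32; 64; -32; -16; 0; 16; -16]].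
Definition V_neg : list (list Z) := [:: [:: 0; 0; 0; 0; 0; 0; 0; 0; 0; 0; 0; 0; 0; 0; 0; 0; 0; 0; 0; 0; 0; 0; 0; 0; 0; 0; 0; 0; 0; 0; 0; 0; 0; 0; 0; 0; 0; 0; 0; 0; -8; -8; 48; 56; -112; -168; 176; 352; -248; -640; 472; 1168; -888; -2136; 704; 3144; -888; -4728; 1088; 6912; -2752; -10640; 1000; 14296; 1456; -18152; 1264; 23880; -1008; -31248; 1040; 41704; 15648; -49096; -8024; 55824; 4872; -65464; -19192; 83640; 31880; -97896; -54040; 97904; 17704; -97832; -53832; 122288; 80760; -145768; -82536; 128304; 88808; -112504; -59808; 128288; 140888; -164336; -120136; 139480; 111552; -88496; -119608; 112976; 116424; -134968; -165504; 121272; 107616; -60584; -121632; 58024; 117880; -102464; -114992; 65960; 115344; -36944; -79768; 19608; 89328; -45848; -73696; 40392; 69840; -2112; -54904; 11016; 43592; -10440; -40160; 15208; 32528; 832; -26376; -2256; 18176; -4840; -15536; 64; 11920; 40; -9048; -2528; 5632; -576; -4392; -400; 3176; 856; -2024; -480; 1256; 328; -784; -120; 568; 296; -272; -112; 144; 72; -64; -32; 32; 24; -8; -8]; [:: 0; 0; 0; 0; 0; 0; 0; 0; 0; 0; 0; 0; 0; 0; 0; 0; 0; 0; 0; 0; 0; 0; 0; 0; 0; 0; 0; 0; 0; 0; 0; 0; 0; 0; 0; 0; 0; 0; 0; 0; 0; 0; 0; 0; 0; 0; 0; 0; 0; 0; 0; 0; 16; 16; -96; -96; 224; 224; -336; -352;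 400; 448; -768; -672; 1744; 1360; -1696; -1328; 1904; 1680; -1648; -752; 6480; 1664; -6944; -1376; 4336; -64; -6608; 2912; 12944; -3920; -26096; 4832; 12864; -7120; -14912; 14032; 34032; -19552; -43872; 13200; 48016; -23712; -20080; 28816; 56064; -34592; -76032; 32848; 63120; -25344; -57968; 51904; 51136; -38592; -102160; 35408; 81888; -37440; -63088; 35936; 71072; -47088; -80576; 17024; 90544; -30192; -57776; 28288; 59120; -18672; -64880; 16544; 59520; -7824; -46080; 18128; 38192; -4304; -38096; 3840; 32800; -4240; -24592; 3776; 19776; -944; -18016; -1776; 13024; -1248; -10096; -208; 7520; 752; -6128; -1328; 3952; 48; -2800; -496; 2048; 528; -1360; -400; 816; 176; -528; -160; 352; 192; -160; -64; 80; 48; -32; -16; 16; 16]; [:: 0; 0; 0; 0; 0; 0; 0; 0; 0; 0; 0; 0; 0; 0; 0; 0; 0; 0; 0; 0; 0; 0; 0; 0; 0; 0; 0; 0; 0; 0; 0; 0; 0; 0; 0; 0; 0; 0; 0; 0; 0; 0; 0; 0; 0; 0; 0; 0; 0; 0; 0; 0; 0; 0; 8; 8; -56; -56; 160; 152; -296; -256; 472; 408; -840; -768; 1640; 1512; -2280; -1912; 2968; 2344; -4328; -4248; 6952; 6472; -9248; -8528; 9112; 6880; -11552; -12968; 18248; 19872; -21512; -21120; 20672; 21368; -17056; -19056; 30760; 46648; -37752; -38936; 26552; 34168; -20168; -38400; 30568; 47800; -48888; -77784; 25152; 29304; -10416; -48640; 22952; 57776; -42448; -63240; 21600; 59752; 7296;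 -17264; 16880; 65400; -23664; -46432; 16432; 42344; 13176; -28912; 3144; 24120; -19128; -45656; -1520; 16472; 2832; -21696; -6040; 13856; -9704; -17584; -1064; 13872; 5840; -5192; 704; 9248; 440; -4632; 1008; 5544; 3328; -2104; 320; 2264; 184; -1832; -504; 952; 400; -760; -288; 328; -80; -384; -200; 144; 48; -96; -48; 40; 8; -24; -16; 8; 8]; [:: 0; 0; 0; 0; 0; 0; 0; 0; 0; 0; 0; 0; 0; 0; 0; 0; 0; 0; 0; 0; 0; 0; 0; 0; 0; 0; 0; 0; 0; 0; 0; 0; 0; 0; 0; 0; 0; 0; 0; 0; 0; 0; 0; 0; 0; 0; 0; 0; 0; 0; 0; 0; 0; 0; 0; 0; 0; 0; 0; 0; 0; 0; 0; 0; 0; 0; -16; -16; 96; 96; -208; -192; 256; 192; -224; -176; 368; 368; -1056; -1104; 608; 528; -112; 240; -512; 528; -464; -96; 1088; 2400; 4688; 5792; -2416; -1056; 4256; 1120; -1696; -6208; 7584; 2448; -14096; -18288; 1920; -1008; -14080; -14688; 8512; 16688; -18848; -9856; 13472; 26288; -6224; -4288; 24880; 30576; -6224; -14288; 18976; 17936; -8112; -24848; 11584; 10320; -13856; -24576; 784; 9104; -14256; -18992; 2224; 11760; -6160; -9264; 2480; 11008; -3232; -7024; 4176; 8432; 928; -3520; 1824; 5088; -512; -3088; 1104; 2992; 704; -1488; 272; 1472; -144; -1008; 0; 672; 224; -432; -32; 256; -16; -240; -112; 80; 32; -64; -32; 16; 0; -16; -16]].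
Definition R_neg : list Z := [:: 0; 0; 0; 0; 0; 0; 0; 0; 0; 0; 0; 0; 0; 0; 0; 0; 0; 0; 0; 0; 0; 0; 0; 0; 0; 0; 0; 0; 0; 0; 0; 0; 0; 0; 0; 0; 0; 0; 0; 0; 16; 0; -96; 0; 240; 0; -480; 0; 944; 0; -1952; 0; 3552; 0; -4608; 0; 8176; 0; -12928; 0; 21344; 0; -24832; 0; 35424; 0; -61760; 0; 73888; 0; -97696; 0; 103856; 0; -193984; 0; 223312; 0; -222784; 0; 297168; 0; -381568; 0; 562016; 0; -420288; 0; 537072; 0; -753056; 0; 856416; 0; -864928; 0; 642800; 0; -1143872; 0; 1202432; 0; -1057280; 0; 961424; 0; -1056448; 0; 1536960; 0; -1056448; 0; 961424; 0; -1057280; 0; 1202432; 0; -1143872; 0; 642800; 0; -864928; 0; 856416; 0; -753056; 0; 537072; 0; -420288; 0; 562016; 0; -381568; 0; 297168; 0; -222784; 0; 223312; 0; -193984; 0; 103856; 0; -97696; 0; 73888; 0; -61760; 0; 35424; 0; -24832; 0; 21344; 0; -12928; 0; 8176; 0; -4608; 0; 3552; 0; -1952; 0; 944; 0; -480; 0; 240; 0; -96; 0; 16].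
Definition S_sq : list Z := [:: 16; 96; 336; 896; 2016; 4192; 8160; 14944; 25712; 41792; 64960; 96832; 138576; 190432; 252192; 323136; 403280; 488192; 577776; 663008; 742880; 807264; 845408; 852992; 813008; 735680; 603888; 426304; 154992; -164832; -662560; -1167232; -1961744; -2745440; -3831568; -4976480; -6323488; -7963776; -9737088; -11922624; -14049056; -16730880; -18712768; -22106944; -23185024; -27202464; -27329376; -30986784; -31160528; -32118304; -32655104; -29536256; -29824624; -23186848; -21963424; -11097152; -9546512; 8470560; 9464416; 36101056; 41186096; 67850304; 87080288; 103928672; 143999264; 152810240; 204500048; 219034752; 270198800; 296573504; 345519888; 371590624; 427301264; 450557760; 505322400; 540971296; 570785152; 632556448; 639297056; 698885664; 715490880; 738643872; 786484672; 788103072; 820108320; 851222336; 824128704; 896798464; 836041472; 887143392; 858994304; 859426656; 856346784; 847120512; 798507760; 827480288; 747509392; 748039712; 734974128; 623461088; 724032816; 545867456; 636216128; 524144544; 513985280; 500209120; 452575680; 410073568; 442900496; 339497216; 392040016; 342601184; 267230336; 375698048; 205213216; 327235168; 241181120; 226525440; 292818384; 209119392; 232414832; 283430656; 159412304; 340455136; 184868640; 281366784; 282270352; 240338208; 309322032; 280069856; 252428800; 345179872; 267309232; 283665120; 369091712; 176467040; 448645152; 176467040; 369091712; 283665120; 267309232; 345179872; 252428800; 280069856; 309322032; 240338208; 282270352; 281366784; 184868640; 340455136; 159412304; 283430656; 232414832; 209119392; 292818384; 226525440; 241181120; 327235168; 205213216; 375698048; 267230336; 342601184; 392040016; 339497216;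 442900496; 410073568; 452575680; 500209120; 513985280; 524144544; 636216128; 545867456; 724032816; 623461088; 734974128; 748039712; 747509392; 827480288; 798507760; 847120512; 856346784; 859426656; 858994304; 887143392; 836041472; 896798464; 824128704; 851222336; 820108320; 788103072; 786484672; 738643872; 715490880; 698885664; 639297056; 632556448; 570785152; 540971296; 505322400; 450557760; 427301264; 371590624; 345519888; 296573504; 270198800; 219034752; 204500048; 152810240; 143999264; 103928672; 87080288; 67850304; 41186096; 36101056; 9464416; 8470560; -9546512; -11097152; -21963424; -23186848; -29824624; -29536256; -32655104; -32118304; -31160528; -30986784; -27329376; -27202464; -23185024; -22106944; -18712768; -16730880; -14049056; -11922624; -9737088; -7963776; -6323488; -4976480; -3831568; -2745440; -1961744; -1167232; -662560; -164832; 154992; 426304; 603888; 735680; 813008; 852992; 845408; 807264; 742880; 663008; 577776; 488192; 403280; 323136; 252192; 190432; 138576; 96832; 64960; 41792; 25712; 14944; 8160; 4192; 2016; 896; 336; 96; 16].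
Definition S_msq : list Z := [:: 16; 32; 16; -32; 32; 192; 208; -96; 0; 704; 960; -320; -960; 1632; 3952; 992; -3984; 992; 9168; 7104; -9984; -2112; 18640; 28832; -17056; -17216; 21104; 77952; -7568; -35712; 5872; 162080; 37344; -73376; -55760; 259488; 200976; -82912; -161248; 284992; 513968; -70688; -229280; 111360; 1174832; 69952; -111728; -484192; 2087120; 366336; 558416; -1478656; 3151456; 1265504; 1451424; -2413952; 3550320; 2697856; 3922928; -3705184; 4030896; 4529504; 6693872; -2175648; 1621088; 9077376; 9903280; 3347968; -3335712; 17681312; 7932800; 21124000; -15747232; 32136544; 4937472; 43439968; -28909056; 55673792; -20826048; 107290656; -83932464; 128437440; -91795184; 206789408; -148994832; 199107072; -133134256; 240206944; -78434592; 74619456; 95064832; -58430976; 348800800; -353727520; 532227120; -414508768; 638712416; -417936096; 385749440; 5909664; -7259888; 535541056; -666147680; 1033542624; -708445696; 764036352; 10396016; -678832288; 2295867920; -3366855232; 5410896224; -6859423936; 8973596544; -9656223936; 10850982704; -10195878080; 9550623024; -6269371264; 3304214416; 2278806528; -7343271696; 14817666720; -20338214256; 27473432128; -31597044592; 36414584640; -36455957904; 36682518848; -31655043888; 26800223200; -16378911472; 7450486176; 5834980800; -16184629920; 29628349024; -37832489856; 47445251984; -50633429184; 54355223808; -50633429184; 47445251984; -37832489856; 29628349024; -16184629920; 5834980800; 7450486176; -16378911472; 26800223200; -31655043888; 36682518848; -36455957904; 36414584640; -31597044592; 27473432128; -20338214256; 14817666720; -7343271696; 2278806528; 3304214416; -6269371264;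 9550623024; -10195878080; 10850982704; -9656223936; 8973596544; -6859423936; 5410896224; -3366855232; 2295867920; -678832288; 10396016; 764036352; -708445696; 1033542624; -666147680; 535541056; -7259888; 5909664; 385749440; -417936096; 638712416; -414508768; 532227120; -353727520; 348800800; -58430976; 95064832; 74619456; -78434592; 240206944; -133134256; 199107072; -148994832; 206789408; -91795184; 128437440; -83932464; 107290656; -20826048; 55673792; -28909056; 43439968; 4937472; 32136544; -15747232; 21124000; 7932800; 17681312; -3335712; 3347968; 9903280; 9077376; 1621088; -2175648; 6693872; 4529504; 4030896; -3705184; 3922928; 2697856; 3550320; -2413952; 1451424; 1265504; 3151456; -1478656; 558416; 366336; 2087120; -484192; -111728; 69952; 1174832; 111360; -229280; -70688; 513968; 284992; -161248; -82912; 200976; 259488; -55760; -73376; 37344; 162080; 5872; -35712; -7568; 77952; 21104; -17216; -17056; 28832; 18640; -2112; -9984; 7104; 9168; 992; -3984; 992; 3952; 1632; -960; -320; 960; 704; 0; -96; 208; 192; 32; -32; 16; 32; 16].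
Definition s_neg : list Z := [:: 16; -64; 96; -224; 400; -928; 1296; -1088; 4704; -2432; 11776; 1152; 25952; -11008; 25920; -34848; 8240; -142656; -70240; -220608; -73808; -308576; 18672; -74368; 369664; 60640; 608032; 290496; 615760; -202848; 180976; -492480; -204512; -972992; -204512; -492480; 180976; -202848; 615760; 290496; 608032; 60640; 369664; -74368; 18672; -308576; -73808; -220608; -70240; -142656; 8240; -34848; 25920; -11008; 25952; 1152; 11776; -2432; 4704; -1088; 1296; -928; 400; -224; 96; -64; 16].
Definition U2_sq : list Z := [:: -46; 42; 22; 45; 39; 28; 35; 4; -21; 23; -25; 3; -50; -4; -36; -41; 39; -14; 3; 48; -19; 38; -16; 18; -6; -40; 4; -13; -45; -42; 6; -25; -49; 2; 7; -10; 18; 50; 0; 29; 18; 2; -19; 8; 38; 6; 12; 25; 46; 9; -39; -31; -22; 49; 11; 15; 39; -13; -47; 5; -32; -21; 29; 21; 3; 25; 3; -19; 10; -15; -12; -8; -26; 39; -22; -21; -25; -43; -10; 41; -9; 50; 12; 42; -3; 9; 24; -48; 14; 20; -3; 50; 31; 9; 22; -31; -32; -33; -8; 47; 31; -21; -8; 50; -13; -6; -14; 38; 13; -46; -27; -23; -48; -23; 27; 16; 44; 19; -7; 44; -25; 4; 5; 29; 43; 36; 26; 22; -16; 10; -22; 16; -41; -11; -42; 16; -38; -44; -9; -24; -45; 29; -21; 38; -14; -44; 8; -2; 20; -30; -24; 25; -36; -16; -12; -42; 2; -35; -11; 40; 23; -17; 49; 28; 30; -31; 24; -42; 40; 28; 39;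 -29; -31; -39; -10; 47; 28; 38; 7; 36; 0; -10; -20; 44; -48; 22; 32; -14; -50; 35; 11; 22; 40; -42; 9; 8; 6; 28; 49; 46; 33; 6; -20; -39; -2; -22; -24; 7; -27; 45; -44; 41; 7; 28; -33; -21; -26; 37; 17; 40; 42; -17; 35; 22; -6; -17; 21; -43; -50; 45; 39; 30; -39; 8; 4; 11; 42; 9; 48; 38; -3; -26; 0; -15; 29; 35; 4; -8; -23; -4; -29; 38; -10; -16; 16; 13; 30; -29; -30; -20; 25; 8; 9; 1; 9; 8; 24; -21; -13; -11; -37; -7; -10; -3; 35; -23; -2; -29; 17; -42; 14; -16; -14; -43; -24; 37; 18; -28; -32; -48; -50; -17; -9; 22; -12; 37; 50; 40; 4; -24; 2; -45; -23; -47; 30; 19; 0; 9; -11; -25; 25; -33; -46; -9; 20; -4; -11; 5; -4; -46; -12; -47; 14; -45; -36; 17; -39; 22; -47; 29; -7; 50; 41; 1; 37; 46; -28; 30; -2; 21; -42; 42; -49; 28; -9; 19; -24; 14; -49; -25; -34; -35; -25; -3; 42; 41; 36; -13; -42; 45; 44; -50; -5; -16; 17; -9; -29; -37; -15; 18; 9; 9; -4; -41; 46; -20; 31; 7; -41; -42; 25; 45; -42; -38; 42; 32; 21; -25; 3; -40; 26; -33; 40; 25; -31; -20; 26; 29; 19; -45; -19; -32; -14; 33; -20; -11; 19; -41; -45; -32; -26; 4; 22; 22; -32; -4; 6; 49; 42; -21; 0; -46; 29; -44; 1; 41; 32; 34; -13; -25; 6; 32; -47; -40; 21; -15; 38; 12;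 -31; -21; 5; -27; 49; 14; 23; 35; 8; 36; 1; 49; -35; -26; -39; 20; -17; -50; -12; -40; -22; -44; 24; 10; 40; 24; -1; -27; 26; 12; -33; -17; 6; -32; -24; 39; 40; -4; 19; 4; 50; -4; 18; -27; -29; 24; -15; 32; 2; 8; 38; 37; -21; -33; 10; 5; 40; -44; 4; 38; 28; -25; 2; -47; -38; -1; -44; -20; -42; -25; -16; -47; -48; -10; -49; 5; -32; 37; 17; 47; 32; 4; 11; -50; -8; -15; 16; -30; -26; -4; 31; 16; -28; 25; -46; 36; -15; -23; 5; -49; 25; -25; 28; 5; -7; -40].
Definition V2_sq : list Z := [:: -36; 32; -1; 12; 1; 42; -8; -20; -7; 26; -29; -6; -4; -6; 7; 0; 48; -45; 0; 5; -24; -18; -35; -45; 13; 25; -46; -4; 22; -49; 27; -9; -16; -11; -45; -5; -23; 5; -46; 27; 45; -45; -46; 25; 42; -11; 44; -36; 30; 31; 38; -35; -9; -16; 33; 9; 35; -3; -28; 23; -14; 40; -38; -5; -35; 13; 38; 3; 28; -35; 12; 5; 34; -50; -45; 16; -37; -31; 26; -25; 10; 9; 44; -16; 31; -30; -27; -9; -10; -2; 10; 17; 16; 19; -17; 28; 5; -21; -23; -33; 35; 17; 18; 36; -6; -14; -21; -43; 28; 45; 19; 43; -41; 45; -19; 14; 45; -27; -31; 40; 17; -42; -33; 17; 26; 1; 14; 24; -18; -39; 16; 4; -8; 37; 19; 34; -16; 28; 25; 19; 20; -41; -43; -44; -11; -47; 44; -32; -32; 17; -40; 27; -17; 42; 12;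 20; -48; 26; 30; -21; 6; 9; 32; -34; 19; 42; 16; -46; 17; -47; 21; 19; -19; 1; -3; 8; 32; 37; -46; 31; 41; -38; 8; 8; -49; -32; 45; 28; 46; -29; -44; -23; -46; 24; 44; -40; 46; -17; -10; 31; -9; 48; 24; -17; -26; 38; -11; -7; -16; 19; -10; -48; 38; -27; 14; 2; -31; -13; -39; -31; -16; -39; 28; 43; 0; -49; 36; -2; 37; 19; 45; 19; 30; -7; -5; -34; -32; 34; 32; -12; -47; -4; 38; 13; 5; -42; 6; -44; -39; 46; -13; -48; 37; -44; -19; -48; -34; -46; -35; -28; 39; 12; -14; 47; 2; -6; 47; 17; 39; 31; 45; 40].
Definition W2_sq : list Z := [:: -13; -32; -144; -208; -544; -560; -1296; -768; -1440; 1904; 3504; 14800; 23632; 52848; 76752; 136352; 180016; 280240; 342144; 487600; 556016; 741328; 792560; 1001664; 990608; 1188192; 1046592; 1195232; 879888; 956592; 447392; 412704; -331792; -513280; -1613456; -1972624; -3561264; -4083600; -6192448; -7006656; -9756512; -11003568; -14652688; -16041536; -20892784; -21842800; -27539584; -27976752; -33119616; -34082352; -36937456; -38544032; -38084816; -38497648; -34986608; -32739472; -24799488; -21771616; -6162992; -4773392; 19526944; 24624432; 50797280; 69981792; 89568000; 125718896; 143777728; 184582400; 215956576; 250122080; 298395200; 334702800; 378894160; 431445280; 459701488; 518884608; 552248240; 583257440; 645130640; 641522480; 707544832; 705760784; 725659280; 749606544; 735920560; 739681216; 760342544; 682921616; 759407456; 635592912; 684177584; 599463056; 561792720; 522826672;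 473107664; 359607920; 400796032; 184077040; 254964048; 75110512; 14023712; 3137696; -189722240; -136708896; -260757104; -338036096; -288772880; -435543808; -389622160; -387607360; -505167344; -318811568; -452061744; -371604000; -271281728; -392880528; -156644896; -225486736; -200477456; 66527712; -159645744; 201666272; 108478016; 209144912; 428083104; 324180336; 544010416; 670312160; 516399760; 958826688; 665116320; 969580368; 925685968; 926109184; 1008602432; 1050917872; 766454960; 1308864400; 563803680; 1264312752; 612302128; 1004212656; 705491824; 827522064; 497264960; 935993696; 165078320; 963585968; 56240944; 716116320; 157558928; 398157392; 108213616; 444294304; -219385952; 642929424; -398922128; 644427568; -237137152; 438398816; 27139440; 386972592; 64096304; 714618640; -21425200; 927674352; 134237664; 929308336; 486862720; 900117328; 601238784; 1201690192; 553277664; 1572344048; 515731264; 1674091168; 867777984; 1470196880; 1130858240; 1529051920; 1109085792; 1632858048; 954775040; 1705900448; 997111360; 1379594704; 1112585744; 1095884672; 1028746656; 1096674848; 712476880; 995737616; 589631504; 713067264; 743123840; 244009840; 646081968; 35801952; 490895696; 27728480; 100784240; -189654048; 173607824; -628676080; 143624640; -815767856; -48713328; -916339136; -291543568; -804543504; -322496736; -1210130544; -200392496; -1430544496; -68629056; -1456777504; -333791552; -1409014816; -315811712; -1516936016; -192924048; -1822188416; -123316432; -1925032656; -55654560; -1722734528; -338508240; -1781862928; -98612464; -1924870144; 82031744; -1960346048; 129417632; -1900450704; 87457024; -1474013408; 93406016; -1641126720; 240050768; -1448303824; 597246432; -1304330432; 354033392; -1003420288; 714121648; -751555008; 858568416;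 -739738832; 1223347264; -459321664; 1439273264; 50401520; 1404115872; 256722224; 1801676432; 603759184; 2132702144; 730846960; 2215690256; 1115399840; 2443893680; 1568611840; 2575822880; 1462187776; 2804367504; 1785251568; 3149277792; 1939233200; 2660897904; 2303938752; 3048412048; 2460807232; 2790476720; 2283091360; 2983964144; 2472864448; 2764393792; 2733183456; 2444644544; 2621934400; 2517433456; 2657638464; 2614459824; 2353935920; 2370220640; 2611336672; 2404524720; 2771247184; 2081267344; 2468377504; 2331235680; 2526557776; 2487420624; 2391309792; 2141167152; 2548943296; 2383251120; 2662084352; 2235141648; 2239984544; 2636962496; 2436168816; 2619063744; 2438628784; 2394360432; 2550034032; 2281310592; 2727005728; 2389930288; 2333838224; 2019222832; 2530370144; 2185536848; 2423396032; 1482360496; 2268076672; 1727495232; 2145394016; 1577687840; 1683439808; 1507546240; 1552279728; 1539091216; 1492258832; 1224947424; 1064891360; 1339057840; 1053751264; 1339210480; 670166864; 1277543792; 670259536; 1205702592; 749532544; 1233928112; 517256592; 1195736096; 626184352; 1605911344; 622183936; 1284772800; 686606624; 1445489376; 1074300528; 1251129168; 926299984; 1421643936; 1135929520; 1362706736; 1172543056; 1366182816; 1060467472; 1265119600; 1194341136; 1654804880; 705050368; 1571970320; 691945072; 1720359552; 492538432; 1505832992; 405678896; 1487895728; 216450432; 1482745440; 82777280; 1282370224; -172256608; 1128452896; -62737472; 1053473760; -564520464; 1105242992; -630740336; 949896016; -951228400; 964952848; -1058073792; 493393664; -1162881936; 746231632; -1556967472; 329518864; -1613399904; 404441920; -1930843856;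 88551280; -2013805264; 211496832; -2508158336; 145166784; -2618910016; 361855104; -3028696304; 5966912; -2934971680; 295024640; -3263409168; 206132672; -3240655968; 334543856; -3345060896; 596999920; -3287473360; 370076864; -3219539680; 1031818336; -3226879488; 1020488912; -3145951728; 1409296880; -3100896512; 1647491312; -2876892928; 1750429680; -2788120512; 2046050160; -2582811968; 2282346640; -2503263088; 2105552416; -2407024656; 2568762800; -2206268496; 2168897168; -2256656960; 2401269808; -2247900448; 2241273440; -2313610464; 2036845312; -2578968464; 2025446816; -2382198912; 1725767504; -2885146832; 1382755872; -2766934960; 1502121632; -3181609264; 851739728; -3158443792; 850429088; -3254750160; 431387488; -3372572112; -7358320; -3540679424; 299908016; -3562163856; -475112480; -3666881104; -179270176; -3649078944; -598763536; -3545726720; -658699824; -3768743984; -708773584; -3145174640; -1050024400; -3406979792; -1245361968; -2864354240; -1034808800; -3019049360; -1449684448; -2920791312; -1035685136; -2639580352; -1365547520; -2787743120; -1358773408; -2555459936; -1219009808; -2486741360; -1770164800; -2411338112; -1565724640; -2258600256; -1849552480; -2409122464; -1899875168; -2576673616; -1742786464; -2410206064; -2063354656; -2757021168; -1898392752; -2683558208; -1821985632; -2783180768; -2153636528; -2809604480; -1884094848; -2336776880; -2251249104; -2639007696; -1873423568; -2350370992; -1733940832; -2192928064; -1752843232; -2051799824; -1418951456; -1558267024; -1069695024; -1780032992; -830359472; -1301823536; -298447872; -923848272; -577441552; -635266496; 34273536; -426310016; 290097024; -487102784; 467151888; -438981648; 831528496; -178606336; 574017680; -556928624; 1117197184; -679316960;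 965432288; -787210512; 826477456; -885542352; 486783536; -630295456; 383133872; -1258286272; 277886976; -1321627552; 345046272; -1508842256; -118844736; -1692197248; -23371312; -1700554128; -66234144; -2122082304; -108358672; -1924203872; -107654896; -1684355376; -356466816; -1631342016; 21318560; -1515109392; 318187824; -1550217424; 533588848; -1358623808; 847756512; -1112196000; 1006665792; -1238166864; 1373043424; -1145926800; 1487168688; -935224000; 1293755792; -901576592; 1353438688; -695627280; 1252167984; -1172173344; 1341797168; -1195182544; 1074550352; -1456132176; 833478352; -1854400272; 522813776; -2177017072; 291387360; -2741689856; -295637200; -2843412096; -750258608; -3174722912; -1246734768; -3550263408; -1414713280; -4007498352; -1547787232; -4296942224; -1801530624; -4623889936; -1811644176; -4728136256; -1886690272; -5051971616; -1735316512; -4930425968; -1812403792; -4746647360; -1743392928; -4519052784; -1624896528; -4183543712; -1281290352; -4090604048; -1033445584; -3699964624; -754677216; -3484438928; -561581632; -3187571888; -366306704; -2929869712; -227222288; -2673564368; -178966400; -2443611072; -99441376; -2238018432; -57213664; -2173994656; -14009264; -2112182928; 48850960; -2227716832; 85288432; -2359463568; 50533792; -2368098432; -144810576; -2346807488; -366420576; -2280742752; -468302864; -2344089456; -507672096; -2318978016; -580025936; -2116731472; -713352896; -1956728864; -652533440; -1885586864; -514973280; -1831715296; -370488464; -1533976416; -506265104; -1078685952; -485671744; -832816320; -269108160; -769540256; 109439248; -667744736; 275716496; -349186208; 246841136; -100945040; 365392896; -91559776; 514079264; -169930224; 542028336; -33327184; 194137312; 119677296; -50436912; 14290304; -113683520;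 -384762000; -88153984; -704106512; -393279680; -802390352; -859042128; -950756672; -1200943744; -1301125424; -1406218192; -1710067904; -1678271120; -1883323888; -2142990384; -1965223136; -2435395072; -2176327072; -2495646720; -2514205600; -2430687712; -2677510400; -2531735280; -2601219952; -2673363824; -2486391904; -2672404304; -2487503824; -2523382512; -2472396896; -2403498896; -2300567584; -2365551552; -2070237008; -2248829504; -1941462832; -1995773040; -1897115024; -1708629728; -1778723872; -1544995136; -1567685296; -1448967408; -1367095376; -1333664480; -1247543440; -1181695200; -1143156208; -1079769536; -1010561344; -1031599856; -884247328; -963745728; -819849024; -847943584; -792049792; -730680112; -742351024; -665987968; -657344368; -625996800; -568043008; -573545792; -500144800; -502290064; -440787232; -435787664; -379512272; -374182096; -318391568; -304655312; -269578064; -228949808; -227362224; -162773392; -180934320; -116134960; -128112144; -82446976; -78686080; -55069584; -41407344; -31475024; -15008608; -12949088; 3700528; 1135072; 16312000; 11721952; 22119408; 18892640; 23286272; 22891232; 22455392; 23703760; 20839104; 22072752; 18364880; 18798096; 15152544; 15029280; 11965600; 11433152; 9042464; 8194144; 6441408; 5478272; 4227376; 3390896; 2553392; 1951152; 1389248; 956000; 571216; 281072; 41632; -123344; -253184; -322112; -375808; -391424; -403456; -391040; -372176; -338544; -301280; -260256; -219856; -181968; -146560; -116624; -89520; -67920; -48752; -34432; -22752; -14912; -8960; -5328; -2768; -1488; -656; -320; -96; -32].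
Definition U2_msq : list Z := [:: 50; -16; 17; 25; -9; 31; -9; -5; 35; -4; -8; -27; -7; -12; 14; -12; 34; 21; 17; -25; 24; -2; 10; -29; 15; -35; -9; -3; -39; 31; -49; -42; 15; 12; -21; -40; -6; -38; 13; 35; -24; -1; -46; 13; 43; -43; 50; 36; 21; 15; 8; -14; -42; 37; 28; 27; -39; 18; -25; 43; 18; -33; 43; 50; 5; 39; 38; 20; 18; 15; 4; 47; 19; 18; -16; 1; -28; 45; 48; 25; -8; -49; 11; -14; -5; 37; 35; -19; 39; -3; -31; 26; -9; -24; -7; -42; 38; -42; 10; -42; -44; -18; -27; -33; 12; 21; -40; 8; 30; 26; -2; 33; -37; 6; 16; -12; -27; 20; 15; -8; -49; -30; 34; -39; -46; -3; -34; -5; -48; -20; 9; 49; -14; -16; 35; 31; 49; -37; -13; -36; 42; 22; 33; 16; -47; -35; -44; -1; 40; 35; 39; -42; 48; -25; -5; -25; 22; 3; -10; 49; -45; 25; 35; -32; 24; 6; -37; -19; -26; 35; 47; -26; 30; -5; -30; 49; 18; -18; 9; -18; 24; 17; -44; 10; 20; -14; -31; 33; -13; -33; 44; 1; 23; 25; -39; -29; -8; 0; -35; -30; -12; -6; 40; 32; 10; -18; -43; 11; 29; 34; 14; 19; 48; -25; 19; 49; -4; 29; 5; 10; 20; -19; -29; -29; -47; -20; -11; -35; -49; -12; -9; -6; -7; -1; 4; 38; 47; -14; -28; -26; 41; 23; 21; 5; 18; -40; -20; 15; 9; 10; -22; 23; 20; 26; -12; 36; -11; 32; 12; 7; -38;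 -22; 4; -7; -5; 20; 12; 3; -19; -42; 31; 3; -16; 20; 48; -23; 33; -45; -20; 19; -29; 41; -9; -36; -26; 48; -4; 33; -33; -50; -15; -22; 46; -35; 47; -2; 42; -38; 4; -43; 2; 12; 41; -23; 11; -2; -13; -8; 6; -1; 46; 0; 37; 19; 2; -49; 26; -7; 19; 32; 47; -32; 50; 37; 21; 35; 8; 39; 12; 7; 2; -34; -10; -47; -33; -32; 8; 38; 36; -6; -41; -23; 21; 45; 31; -44; -23; -16; 9; 40; 31; 32; -19; -9; -31; -42; -36; 4; -25; 37; 25; -8; 13; -41; -42; -8; 15; 8; 13; 45; -23; -43; -45; 42; -9; -13; 41; 7; 2; 41; -5; 32; 41; 37; 45; 36; 47; -14; -30; -2; -8; 14; 25; 32; 29; 9; 27; 11; -29; 24; 7; 39; 32; 7; 25; 48; -36; 30; 20; -14; -11; 2; -30; -36; -20; -6; -24; -11; -37; 38; 23; 30; -1; -19; -2; -36; 22; 13; -38; -45; 4; -15; -45; -29; -43; -5; -36; 4; -28; -1; 13; -7; -23; 44; -33; -44; 5; 1; -34; 23; -43; -11; 11; -44; 31; 24; -9; -14; -50; -29; -14; 0; -39; 40; 45; 25; 34; -39; 6; -17; -48; -21; -18; -43; -27; -29; 0; -40; -37; -28; 23; 50; -26; -36; -13; 47; 47; -40; -16; -4; -13; -43; -48; -27; 42; -39; -23; -44; 2; 35; -33; -16; 43; 32; -4; 30; 19; 28; -37; 5; -17; 47; -15; -22; -11; 38; 3; 46; -3; 6; -39; 5; 26; -35; -44; -29; -33; -33;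 -15; -1; -12; -33; -39; -16; -44; -44; -36; 32; 28; -42; 0; -34; 29; -29; 0; 22; 36; -31; -5; -27; -36; 49].
Definition V2_msq : list Z := [:: -31; 17; 4; -10; -50; -3; -23; -4; 10; 50; -23; 11; 41; 32; -8; 28; 41; -15; 48; 49; -5; 5; 41; 44; -48; 22; 1; 34; 42; 35; 32; 17; -34; 3; 44; -10; 33; 38; 33; 0; -39; 22; -29; 30; 7; 39; -4; -19; 8; 3; -32; 48; -27; -20; 50; -28; -5; 42; 42; -7; -37; 33; 17; 11; -43; -30; -14; 12; 11; 24; 49; 21; 9; -9; -35; -11; 45; -1; 32; -33; 9; -2; 10; 8; 3; -14; -45; 37; -44; 6; 23; -20; -4; 14; -22; -23; 40; -38; 15; 36; -11; -49; -5; -27; -21; 40; -10; 16; -43; -29; 4; -5; -23; -40; 43; -13; 35; -10; 31; -50; 32; -40; 0; -41; -29; -47; -5; 37; -2; -6; 23; -8; 6; 27; -34; -3; -14; -50; -41; 11; -7; -30; -11; 0; 0; 47; 14; -50; -32; -20; 47; -41; -1; -45; 23; 20; -48; -15; 14; 16; -12; -27; 1; -23; -10; 47; -25; -36; -32; -35; -20; 19; 35; -39; -48; -19; -8; 32; 40; -18; -50; -45; 17; 28; 45; -25; 50; 6; 29; 35; -43; 49; 7; 44; -50; -43; -16; -27; -11; 4; -39; 16; 41; 25; -49; 17; 44; -34; 31; -4; -47; -5; -1; -25; 14; -30; 34; -18; 5; -38; 6; 24; 23; -48; -49; 22; -43; 33; 36; -9; -22; 30; 37; -24; 0; -27; -14;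 -48; 48; 5; -7; -41; 10; -3; 33; 12; -46; -6; 40; 29; -21; 32; 22; 8; 40; -5; 4; 13; -42; 7; -23; 15; -32; 5; -41; -4; 16; 28; 28; 28; -36; -48; -32; -48; 39; -49].
Definition W2_msq : list Z := [:: 3; 16; 16; -16; 16; 96; 80; -32; 80; 400; 416; -208; -224; 1200; 1712; 112; -1296; 2000; 4624; 1872; -4896; 3072; 11088; 11136; -10160; -1072; 18832; 34592; -13264; -7280; 26464; 85648; 144; -34080; 17056; 159200; 74016; -60000; -12752; 234176; 243376; -102832; -59952; 241792; 648816; -71264; -60464; 77312; 1261808; 84928; 115008; -314560; 2138784; 744896; 332800; -759392; 2756464; 1800528; 1669920; -2039936; 4088112; 3127632; 3467568; -1891760; 3156672; 6709040; 6354656; -531792; 2120592; 11772704; 7884704; 7987360; -4622768; 20805648; 11672976; 17292352; -8838320; 32650848; 1952688; 57341280; -46131648; 79390816; -34066704; 114944832; -77041296; 108756464; -43531632; 136283472; -36431984; 40384432; 81607872; -2904096; 169512240; -136789312; 218551600; -33748176; 143798448; 41242320; -83802528; 400710016; -343760256; 628504304; -642500432; 817954896; -406979312; 280303312; 340880064; -856283696; 2007023920; -2618149248; 3683667824; -4277859904; 5266855328; -5130771984; 5259471856; -4315778416; 3530601008; -1105318912; -770624592; 3800838480; -5959648864; 9285435824; -10674175504; 12520336848; -12067948320; 12136686576; -8950497408; 6298885040; -930009840; -2984687952; 9587857104; -13431025696; 18493004480; -19517902368; 21600292032; -18513288144; 15660069680; -7806861152; 1241766608; 9949823024; -18994296192;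 30467132976; -37643043056; 45813531120; -48493454960; 49872493264; -44957511904; 38776409504; -26973423776; 13599234192; 3390216304; -19758352128; 36990344944; -52287763360; 65072092720; -73591708848; 77736674544; -77720287936; 71802320864; -62100785328; 47432415184; -31353200576; 11151849904; 8087291008; -28642199760; 45254252448; -61883606608; 72478884768; -80919812256; 82369009696; -81551449232; 73777264208; -63172261520; 47205595696; -29949905568; 9553065968; 11073719424; -31068769616; 49274879936; -63857514640; 75689506784; -80658011248; 82290816832; -75895883024; 67493134400; -50420522960; 34230033664; -11313753328; -6815886768; 29852480704; -43702044560; 60172142576; -64094966800; 70650806832; -62348965680; 57854945552; -39194804624; 28183089920; -4300396896; -7363278048; 29230186960; -34190323328; 48812506016; -43938825280; 48260856208; -32797122432; 29637885280; -8213020496; 1421274560; 20401173824; -24091207536; 40114022544; -38764604864; 46848656624; -38436337744; 39057390848; -28484828912; 24695543744; -14172352384; 9549276720; -4868323328; 1171712400; -506960704; -1990997280; -2174641056; -2596950320; -368860176; -7685796624; 6390711376; -19649452448; 23945058048; -37933221824; 43698166416; -55601796928; 62009223600; -63024491472; 65363154576; -53198526080; 53093694144; -23774750656; 22424575728; 18106445952; -13516670976; 61925622880; -45405527168; 91945752464; -57861687152; 99035092144; -48061242496; 79221734400; -15963685056; 40355182160; 24983499312; -5384017632; 61466838832; -42928690832; 77729194928; -61170084048; 69484774624; -58667192176; 37529378960; -40481915920; -5092937216; -20950507712; -47268402096; -8595440512; -73632374448; -13751787344; -84094370704; -30860708992; -77463802944; -55703621408; -69071206928; -71583815936; -60449851536;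 -75567986848; -64117388096; -61678631456; -67927437120; -40476356800; -74286989600; -16639634608; -62633372544; -2856128128; -41492507312; 1682694336; -663934816; -1426165952; 36466888560; -638158720; 73192988160; 9860379968; 85326885328; 34500709008; 86803034432; 68193350512; 67850297232; 101508540224; 55397407008; 121467794672; 42480474112; 120502508816; 50637906320; 97341857840; 61344088608; 59176689840; 83482405504; 15769010320; 88962084320; -19219639184; 87032585984; -39300915552; 57866484784; -40964864416; 23219297600; -31650386208; -27101280528; -15644060048; -64256378368; -3600651728; -98938650224; 2649020048; -108199933664; -1826869600; -112526416128; -10312493920; -95387703584; -21665967584; -82305400512; -28413189584; -58382981680; -30774094832; -46979437744; -25482638400; -27421606128; -17289382672; -18319732288; -8390963344; 1794411808; -3218241952; 14651219600; -2286355312; 39577067728; -5963567744; 55593348704; -13151249728; 77408919072; -20193603184; 84831927840; -25443001120; 93008193248; -25897411280; 84096505728; -22711105760; 73598875296; -12824863264; 47410629936; 1137099200; 21932513456; 21031859600; -15594898000; 41421748384; -47373233056; 63122128256; -82005802448; 77572536240; -100073467136; 84076029376; -111141161296; 74432802544; -98307986400; 53390794368; -75876897696; 17669431104; -34555009504; -20306876848; 2732246160; -58487608720; 41576308368; -80892659904; 59928442624; -90280291200; 68509432608; -77694952416; 53152549120; -55430349312; 34293388128; -21134807792; 4672674752; 6984425152; -14207962576; 32596022144; -32082381632; 42077579504; -32000524336; 44756899856; -27740514592; 30570167040; -6834505248; 11818823120; 15524283120; -19085465120; 50282464736; -48659817584; 80196982704; -81324569104; 110883038752; -98990530128; 120704225104;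 -101162651232; 113646120160; -72708268032; 72422795264; -20540754048; 11959135936; 55800445360; -69053528576; 133252424016; -139188022256; 197077196480; -190810421232; 221581333264; -195297700336; 201847803456; -161336118000; 134163228608; -83969831296; 38470086640; 3198713488; -65478886448; 88087157712; -146546316800; 134276876768; -190487733152; 143281699312; -186307754944; 103896745840; -145599128512; 43452274528; -81709828224; -28972650544; -21062244160; -78904537520; 21892391104; -102773973792; 33878524144; -86205086080; 20712090928; -47306188736; -10560220576; 8787651472; -40388941296; 55812260960; -57110597680; 87623481728; -49348062208; 90390995808; -19596626528; 73892601616; 26866868848; 40491858320; 76624357600; 6298964928; 118528158448; -23214724928; 142752014528; -36721803584; 145779328400; -37270240432; 129882370144; -25391499712; 99457263536; -9087588384; 63421986640; 8724026464; 27012114880; 20156915040; -1641431264; 22849200544; -21703500640; 15079678608; -28823061408; -816622448; -27599456032; -23087517008; -18132930928; -46763046576; -9520581360; -64309827984; -4245807664; -70633555728; -10579955424; -62249819984; -26967206272; -41620615488; -53598302528; -10413030592; -81141465600; 20254174192; -103802871504; 44604441616; -112205785888; 53400624800; -104541990112; 51251752384; -80895450752; 35985360592; -48546815440; 20041922064; -14685164416; 5281160832; 12636405888; 4855328768; 29840773264; 11679249632; 35668307760; 30800609504; 34079106464; 49486168384; 29137460320; 70294427008; 26624323776; 78074775728; 28370444048; 78445803312; 37156572224; 63120622800; 50105210144; 42180533744; 66563035024; 9971781744; 80435545424; -20792616640; 90772477552; -51690450768; 91266096288; -71802911024; 82495305072; -85381710816; 61529883664; -85724142144; 34747400976; -80002349680;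 4065332688; -68267793184; -21940053904; -59222839808; -41793094256; -50542926016; -50986609072; -44861229952; -54485149376; -36484009808; -54542112832; -24224379264; -58306755664; -1656721184; -66030968992; 27846795760; -79090920624; 61469066032; -90413741632; 88840458528; -94994005648; 105121860176; -84614885792; 101740382432; -59737554864; 80470688112; -20467953776; 43380106544; 23601788624; 2410627712; 65995295792; -35835224912; 94040005536; -60454581120; 105521462192; -68959156176; 95276267024; -58888564992; 70812098752; -37362947744; 34579328608; -10419531552; 549614160; 12920039088; -27534261104; 26401691552; -39309784160; 26295748720; -38316938048; 13095478832; -22929764816; -6285753344; -4175038000; -26384354768; 13392479632; -37375105536; 19428543888; -36969142432; 13383878224; -20932942608; -4864009232; 2128699792; -28041445056; 27596827360; -47448060240; 43007084560; -55611641648; 45451821184; -46607499280; 29497886416; -23825241664; 1553924576; 9475339456; -31709016080; 40210972864; -58808688560; 62382470768; -71759404480; 65075587520; -66422167280; 50655723536; -42149079232; 19032722896; -7122212064; -18641429280; 32384382768; -55715309920; 63585368928; -81198736608; 83109852864; -90684904512; 82842272704; -82311911200; 67746902640; -58488710512; 38102748832; -25892056672; 4048327296; 10971761248; -31526536000; 42996527104; -59839262096; 67962860416; -78169704640; 78463652816; -82258871808; 76307209136; -71920603776; 58051464688; -49036147392; 30429167728; -17174535456; -3609784992; 14634319136; -33105132496; 39976588880; -52042553552; 49172586352; -53202173664; 41569910944; -36731049280; 16769923008; -7985417040; -14122377808; 22738188176; -41503410576; 42447306464; -52274196768; 43647436592; -42300057152; 22576528240; -12385373344; -12998200144; 27297467104;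 -52569842928; 62795828368; -80034828304; 81331753760; -86482391648; 75187736720; -67825155536; 47052831344; -30868982496; 4965794464; 13053295456; -36196112976; 49968507664; -65246420832; 69403178336; -73626900368; 68250846016; -62730477088; 49395240432; -37971429184; 22201553040; -9628458688; -4739373120; 13796428048; -22751332944; 26670362240; -29911444160; 28195684448; -26485287872; 21708062672; -17592280832; 11348027328; -7058933296; 2104223408; 836132000; -4111184592; 4923818464; -5896662576; 5294212736; -5153355072; 3540546096; -2727695792; 1306195408; -698126384; -561120864; 788646336; -1253473472; 1031651504; -1243298080; 718559072; -543026240; 89121472; -78801296; -342365680; 371282784; -524731680; 388067040; -534513488; 389571632; -345114288; 168015712; -207088576; 63269840; -27711280; -41909696; -19725600; -49382880; 41735200; -52140688; 3794208; -46367440; 30032320; -20368592; -6414800; -24989984; 10875248; -6029296; 739584; -22455440; 9181552; -3634880; 2913296; -13504592; 941536; 692608; 3058112; -7244480; -1460240; 582512; 2268448; -2910912; -2603664; 368752; 1940112; -816176; -1992416; -369088; 913792; 457520; -1461072; -210880; 240128; 756128; -786032; -364592; -44576; 552976; -209504; -244624; -129184; 281584; 5488; -169792; -115280; 109232; 89504; -56896; -84624; 10704; 61744; -13808; -36448; -12464; 34224; 8864; -16960; -15808; 10576; 7840; -1760; -7664; 1552; 4464; 80; -3360; -624; 1520; 1040; -672; -640; 288; 288; -96; -128; 32; 96; 16; -48; 0; 16].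
Definition U2_n4 : list Z := [:: 4; -21; 12; 24; 13; 28; -33; 37; -25; -46; 41; 15; -44; 18; -17; 9; 38; 46; -47; 44; -5; 5; 0; -10; 34; 4; -21; -31; 17; -37; 40; -29; -28; -16; 18; 49; -38; 28; -16; -17; 5; -28; -21; -39; -12; -3; 22; -23; -1; -31; 27; 38; -14; -44; 42; 16; 21; -5; 7; -38; -6; -20; 39; 14; -34; -50; 8; 38; -1; -40; -5; -3; -44; 39; -21; -38; 28; 12; 11; 48; -34; -50; -50; 31; -6; 2; -32; -39; 20; 49; 43; 28; -27; -20; -49; -16; 42; 37; -48; -24; -24; -9; -17; 32; 27; -18; 36; 49; -44; 13; -47; -7; 20; -48; -17; 2; 21; 6; -41; -21; 19; -38; 35; -27; -19; -39; 20; -20; -11; 38; 41; -4].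
Definition V2_n4 : list Z := [:: 15; 37; 22; -43; 45; 48; -42; 48; -6; 26; 12; 17; 44; 39; -41; -34; 49; -49; -35; -18; -33; -45; -3; -7; 12; -5; 5; -27; 5; -36; -29; 17; 35; -38; -14; -20; 7; -46; -2; 25; -35; 19; -3; -44; -24; -23; 32; 38; 1; -48; -24; 3; -10; 0; -18; 22; 8; 9; -12; 14; 35; -37; -12; 33; 44; 4].
Definition W2_n4 : list Z := [:: 3; 0; 32; -16; 96; -112; 304; -224; 400; -656; 1264; -576; 1664; -656; 6464; 4080; 7600; 5552; 12336; 1984; -21440; -33136; -55808; -61312; -123344; -40768; -36032; 111184; 35712; 298832; 210800; 402576; -62096; 192032; -268496; -18944; -801008; -213696; -541488; 341968; -466768; 630736; 275200; 1238864; -19504; 773456; 9232; 631200; -766864; 199632; -493056; -37376; -545760; 358448; -169760; -66768; -7200; 692624; 150928; 66864; 862128; 659408; 429120; 366704; 681920; -135728; -262048; -415344; -160160; -1229776; -170352; -177664; -2688; -140288; 1261264; 230496; 556336; -100384; 1188112; -689584; 52864; -479152; 438016; -1405792; 525712; -975024; -8688; -1432208; 739248; -563792; 367936; -1086928; 704912; -559680; 857744; -1114208; -472960; -515648; 732096; -1101344; -908880; -683040; 638816; -110288; -24720; -63200; -382096; -79616; -340672; -1396992; -2006704; -436336; 49200; 98816; -529568; 1150400; 803408; 875456; 86208; 125584; -1119984; -152144; -681648; -757152; -1948112; -158528; 152864; 348896; -456032; 1104032; 839280; 1321936; 231440; 533104; -294944; 365504; -471728; -717392; -1398368; -115552; -243552;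 -248496; -112352; 830256; 910528; 585968; 628656; 149744; 2112; -559984; -17024; -978176; -268064; -406416; 793680; -223808; 791296; 265664; 1071472; -319600; 377104; -536896; -32480; -973712; -94720; -534064; 122608; -183024; 557072; 224384; 458816; 124048; 330608; -14272; 7216; -158576; -35872; -126096; -56944; -70096; 2912; -14544; 8848; -912; 12768; 2688; 4608; -64; 1984; -128; 368; -272; 160; -48; 48; -16; 16].
Definition U2_n8 : list Z := [:: -41; 45; 22; -21; 25; 46; -30; 13; 43; -16; -28; 46; -22; -33; -42; -47; -13; -39; 9; -40; -47; 6; -7; -11; -9; 43; 21; 21; -3; 46; -42; -47; -10; 18; 43; -50; -41; -29; -36; 45; 35; 0; -45; -47; 2; -13; 12; 35; 18; -32; -43; 41; -18; -17; 21; 36; -13; 21; -3; 23; -30; 5; 2; 31; -32; -8].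
Definition V2_n8 : list Z := [:: -41; -45; 22; 21; 25; -46; -30; -13; 43; 16; -28; -46; -22; 33; -42; 47; -13; 39; 9; 40; -47; -6; -7; 11; -9; -43; 21; -21; -3; -46; -42; 47; -10; -18; 43; 50; -41; 29; -36; -45; 35; 0; -45; 47; 2; 13; 12; -35; 18; 32; -43; -41; -18; 17; 21; -36; -13; -21; -3; -23; -30; -5; 2; -31; -32; 8].
Definition W2_n8 : list Z := [:: -13; 0; -128; 0; -448; 0; -1632; 0; -3904; 0; -9632; 0; -13280; 0; -18528; 0; -12864; 0; -57184; 0; -142272; 0; -402816; 0; -488160; 0; -610944; 0; -61024; 0; 33152; 0; 539776; 0; -161152; 0; -394656; 0; -1349696; 0; -1432864; 0; -1373696; 0; -726112; 0; 76288; 0; 636608; 0; 819424; 0; 680224; 0; -442656; 0; -1103456; 0; -2388224; 0; -1389408; 0; -938432; 0; 999072; 0; 664064; 0; 674912; 0; -613632; 0; -773760; 0; -720256; 0; -684192; 0; -297376; 0; -870816; 0; -27552; 0; -786976; 0; -317600; 0; -1739264; 0; -1254656; 0; -1644480; 0; -558176; 0; -672704; 0; -335936; 0; -745504; 0; -684768; 0; -730784; 0; -458752; 0; -266048; 0; -86752; 0; -36576; 0; -22176; 0; -26208; 0; -17728; 0; -10432; 0; -3680; 0; -1312; 0; -256; 0; -64].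
Definition Q_sq := sqY (map sq1 Pl).
Definition Q_msq := sqY (map (fun c => sq1 (negx c)) Pl).
Definition Q_neg := map negx Pl.
Lemma chk1_sq : zero2 (add2 (add2 (mul2 U_sq Pl) (mul2 V_sq Q_sq)) (negl R_sq :: nil)) = true.
Proof. vm_compute. reflexivity. Qed.
Lemma chk1_msq : zero2 (add2 (add2 (mul2 U_msq Pl) (mul2 V_msq Q_msq)) (negl R_msq :: nil)) = true.
Proof. vm_compute. reflexivity. Qed.
Lemma chk1_neg : zero2 (add2 (add2 (mul2 U_neg Pl) (mul2 V_neg Q_neg)) (negl R_neg :: nil)) = true.
Proof. vm_compute. reflexivity. Qed.
Lemma chkf_sq : zero1 (addl (mull (facl 76 4 4) S_sq) (negl R_sq)) = true.
Proof. vm_compute. reflexivity. Qed.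
Lemma chkf_msq : zero1 (addl (mull (facl 72 4 8) S_msq) (negl R_msq)) = true.
Proof. vm_compute. reflexivity. Qed.
Lemma chkf_neg : zero1 (addl (mull (facl 40 2 2) (sq1 s_neg)) (negl R_neg)) = true.
Proof. vm_compute. reflexivity. Qed.
Lemma chk2_sq : zero1 (addl (addl (mull U2_sq S_sq) (mull V2_sq (sq1 S_sq))) (addl ((-1) :: nil) (scall (Z.opp 101) W2_sq))) = true.
Proof. vm_compute. reflexivity. Qed.
Lemma chk2_msq : zero1 (addl (addl (mull U2_msq S_msq) (mull V2_msq (sq1 (negx S_msq)))) (addl ((-1) :: nil) (scall (Z.opp 101) W2_msq))) = true.
Proof. vm_compute. reflexivity. Qed.
Lemma chk2_n4 : zero1 (addl (addl (mull U2_n4 s_neg) (mull V2_n4 (sq1 (negx s_neg)))) (addl ((-1) :: nil) (scall (Z.opp 101) W2_n4))) = true.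
Proof. vm_compute. reflexivity. Qed.
Lemma chk2_n8 : zero1 (addl (addl (mull U2_n8 s_neg) (mull V2_n8 (negx s_neg))) (addl ((-1) :: nil) (scall (Z.opp 101) W2_n8))) = true.
Proof. vm_compute. reflexivity. Qed.

End Data.

Lemma evalT t (x : algC) : (map_poly intr (Tpoly t)).[x] = ev2 Pl x (x ^+ (2*t)).
Proof.
set y := x ^+ (2 * t).
have e8 e : x ^+ (8 * t + e) = y ^+ 4 * x ^+ e.
  by rewrite exprD /y -exprM; congr (x ^+ _ * _); lia.
have e6 e : x ^+ (6 * t + e) = y ^+ 3 * x ^+ e.
  by rewrite exprD /y -exprM; congr (x ^+ _ * _); lia.
have e4 e : x ^+ (4 * t + e) = y ^+ 2 * x ^+ e.
  by rewrite exprD /y -exprM; congr (x ^+ _ * _); lia.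
have e2 e : x ^+ (2 * t + e) = y * x ^+ e.
  by rewrite exprD.
have hX n : (map_poly (intr : int -> algC) 'X^n).[x] = x ^+ n.
  by rewrite map_polyXn hornerXn.
have hX1 : (map_poly (intr : int -> algC) 'X).[x] = x.
  by rewrite map_polyX hornerX.
rewrite /Tpoly ?mulr_natl ?rmorphD ?rmorphN ?rmorphMn ?rmorph1 ?hornerD ?hornerN ?hornerMn ?hX ?hX1 ?hornerC ?e8 ?e6 ?e4 ?e2.
rewrite /ev2 /ev1 /Pl /= ?zr0 ?zrpos ?zrneg.
cbv [Pos.to_nat Pos.iter_op Nat.add].
ring.
Qed.


Lemma rootT t b (xi : algC) : 'Phi_b %| Tpoly t -> b.-primitive_root xi ->
  ev2 Pl xi (xi ^+ (2 * t)) = 0.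
Proof.
move=> /Pdiv.Idomain.dvdpP [[c K] c0 e] pr; simpl in c0, e.
rewrite -evalT.
have := congr1 (fun p : {poly int} => (map_poly (intr : int -> algC) p).[xi]) e.
rewrite /= map_polyZ rmorphM /= hornerZ hornerM (Cintr_Cyclotomic pr).
have -> : (cyclotomic xi b).[xi] = 0 by apply/eqP; rewrite -/(root _ _) root_cyclotomic.
rewrite mulr0 => /eqP; rewrite mulf_eq0 intr_eq0 (negbTE c0) /= => /eqP //.
Qed.

Lemma prim_ne b (xi : algC) : (2 < b)%N -> b.-primitive_root xi ->
  [/\ xi != 0, xi - 1 != 0 & xi + 1 != 0].
Proof.
move=> hb pr; split.
- by rewrite (prim_root_eq0 pr); case: b hb pr.
- rewrite subr_eq0; apply/negP => /eqP e.
  have := prim_order_dvd pr 1; rewrite e expr1 eqxx dvdn1 => /eqP hb1.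
  by rewrite hb1 in hb.
- rewrite addr_eq0; apply/negP => /eqP e.
  have := prim_order_dvd pr 2; rewrite e sqrrN expr1n eqxx => /dvdn_leq.
  by move=> /(_ isT) h; lia.
Qed.

Lemma half_pow b m (xi : algC) : b = m.*2 -> (0 < m)%N -> b.-primitive_root xi ->
  xi ^+ m = -1.
Proof.
move=> hb m0 pr.
have e2 : (xi ^+ m) ^+ 2 = 1 by rewrite -exprM muln2 -hb prim_expr_order.
have ne : xi ^+ m != 1.
  by rewrite -(prim_order_dvd pr) hb; apply/negP => /dvdn_leq; move/(_ m0); lia.
by move/eqP: e2; rewrite sqrf_eq1 (negbTE ne) /= => /eqP.
Qed.

Lemma pow2t_neg (a : algC) t : (- a) ^+ (2 * t) = a ^+ (2 * t).
Proof. by rewrite exprM sqrrN -exprM. Qed.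
Lemma pow2t_sq (a : algC) t : (a ^+ 2) ^+ (2 * t) = (a ^+ (2 * t)) ^+ 2.
Proof. by rewrite -!exprM mulnC. Qed.

Lemma facl_ne k a c (xi : algC) : xi != 0 -> xi - 1 != 0 -> xi + 1 != 0 ->
  ev1 (facl k a c) xi != 0.
Proof.
move=> h0 h1 h2; rewrite ev1_facl.
by rewrite !mulf_neq0 // expf_neq0.
Qed.

Theorem mainTheorem8 (t b : nat) : (3 <= b)%N -> ~~ ('Phi_b %| Tpoly t).
Proof.
move=> hb; apply/negP => hd.
have b0 : (0 < b)%N by lia.
have b2 : (2 < b)%N by lia.
have hr xi := @rootT t b xi hd.
have [z pz] := C_prim_root_exists b0.
have zA : z \in Aint := Aint_prim_root pz.
have p101 : (1 < int_of_Z 101)%R by [].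
case: (boolP (odd b)) => ob.
-
  have prsq (xi : algC) : b.-primitive_root xi -> b.-primitive_root (xi ^+ 2).
    by move=> p; rewrite prim_root_exp_coprime // coprime2n.
  have hS (xi : algC) : b.-primitive_root xi -> ev1 S_sq xi = 0.
    move=> p; have [n0 n1 n2] := prim_ne _ _ b2 p.
    apply: (stage1 Pl Q_sq U_sq V_sq R_sq (facl 76 4 4) _ xi (xi ^+ (2 * t)) chk1_sq chkf_sq).
    + exact: hr p.
    + rewrite /Q_sq ev2_sqY (ev2_map _ _ _ _ (xi ^+ 2)); last by move=> c; rewrite ev1_sq1.
      by rewrite -pow2t_sq; exact: hr (prsq _ p).
    + exact: facl_ne.
  apply: (stage2 _ _ _ _ _ _ _ chk2_sq p101 zA (hS z pz)).
  by rewrite ev1_sq1; exact: hS _ (prsq _ pz).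
have hbm : b = (b./2).*2.
  by rewrite -[LHS](odd_double_half b) (negbTE ob) add0n.
set m := b./2 in hbm.
have m0 : (0 < m)%N by lia.
case: (boolP (odd m)) => om.
- (* b = 2 mod 4 *)
  have prs (xi : algC) : b.-primitive_root xi -> b.-primitive_root (- xi ^+ 2).
    move=> p; have -> : - xi ^+ 2 = xi ^+ (m + 2) by rewrite exprD (half_pow _ _ _ hbm m0 p) mulN1r.
    rewrite prim_root_exp_coprime // hbm -muln2 coprimeMr coprimen2 oddD om andbT /=.
    by rewrite coprime_sym /coprime gcdnDl -/(coprime m 2) coprimen2.
  have hS (xi : algC) : b.-primitive_root xi -> ev1 S_msq xi = 0.
    move=> p; have [n0 n1 n2] := prim_ne _ _ b2 p.
    apply: (stage1 Pl Q_msq U_msq V_msq R_msq (facl 72 4 8) _ xi (xi ^+ (2 * t)) chk1_msq chkf_msq).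
    + exact: hr p.
    + rewrite /Q_msq ev2_sqY (ev2_map _ _ _ _ (- xi ^+ 2)); last first.
        by move=> c; rewrite ev1_sq1 ev1_negx.
      by rewrite -pow2t_sq -(pow2t_neg (xi ^+ 2)); exact: hr (prs _ p).
    + exact: facl_ne.
  apply: (stage2 _ _ _ _ _ _ _ chk2_msq p101 zA (hS z pz)).
  by rewrite ev1_sq1 ev1_negx; exact: hS _ (prs _ pz).
(* 4 | b *)
have prn (xi : algC) : b.-primitive_root xi -> b.-primitive_root (- xi).
  move=> p; have -> : - xi = xi ^+ (m + 1) by rewrite exprD (half_pow _ _ _ hbm m0 p) expr1 mulN1r.
  rewrite prim_root_exp_coprime // hbm -muln2 coprimeMr coprimen2 oddD (negbTE om) /= andbT.
  by rewrite coprime_sym /coprime gcdnDl gcdn1.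
have hS (xi : algC) : b.-primitive_root xi -> ev1 s_neg (xi ^+ 2) = 0.
  move=> p; have [n0 n1 n2] := prim_ne _ _ b2 p.
  rewrite -ev1_sq1.
  apply: (stage1 Pl Q_neg U_neg V_neg R_neg (facl 40 2 2) _ xi (xi ^+ (2 * t)) chk1_neg chkf_neg).
  + exact: hr p.
  + rewrite /Q_neg (ev2_map _ _ _ _ (- xi)); last by move=> c; rewrite ev1_negx.
    by rewrite -(pow2t_neg xi); exact: hr (prn _ p).
  + exact: facl_ne.
have wA : z ^+ 2 \in Aint by rewrite rpredX.
have hmk : m = (m./2).*2.
  by rewrite -[LHS](odd_double_half m) (negbTE om) add0n.
set k := m./2 in hmk.
have k0 : (0 < k)%N by lia.
have zm := half_pow _ _ _ hbm m0 pz.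
case: (boolP (odd k)) => ok.
- (* b = 4 mod 8 *)
  have pk : b.-primitive_root (z ^+ (k + 2)).
    rewrite prim_root_exp_coprime // hbm hmk -!muln2 !coprimeMr !coprimen2 oddD ok /= andbT.
    by apply/andP; split=> //; rewrite coprime_sym /coprime gcdnDl -/(coprime k 2) coprimen2.
  apply: (stage2 _ _ _ _ _ _ _ chk2_n4 p101 wA (hS z pz)).
  rewrite ev1_sq1 ev1_negx.
  have <- : (z ^+ (k + 2)) ^+ 2 = - (z ^+ 2) ^+ 2.
    by rewrite -exprM mulnDl exprD muln2 -hmk zm -exprM; ring.
  exact: hS _ pk.
- (* 8 | b *)
  have pk : b.-primitive_root (z ^+ (k + 1)).
    rewrite prim_root_exp_coprime // hbm hmk -!muln2 !coprimeMr !coprimen2 oddD (negbTE ok) /= andbT.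
    by apply/andP; split=> //; rewrite coprime_sym /coprime gcdnDl gcdn1.
  apply: (stage2 _ _ _ _ _ _ _ chk2_n8 p101 wA (hS z pz)).
  rewrite ev1_negx.
  have <- : (z ^+ (k + 1)) ^+ 2 = - z ^+ 2.
    by rewrite -exprM mulnDl mul1n exprD muln2 -hmk zm; ring.
  exact: hS _ pk.
Qed.
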